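(* Let $$\begin{aligned}p_4(k)=\;&582076609134674072265625k^{40}-347825698554515838623046875k^{38}\\&+100074581801891326904296875000k^{36}-18656729921698570251464843750000k^{34}\\&+2406402165103435516357421875000000k^{32}-223881811253170562744140625000000000k^{30}\\&+13463175828870323610839843750000000000k^{28}-546554928845186341347265625000000000000k^{26}\\&+44602844570033253018161875000000000000000k^{24}-5130242398470886015317438950000000000000000k^{22}\\&+805214383330095009369880969748800000000000000k^{20}+8091804003905867976154901735852032000000000000k^{18}\\&-262076670696960781271382283372767764480000000000k^{16}\\&+483089080872113925346827615868453187944448000000000k^{14}\\&+76133654804831682593043073614469922630706135040000000k^{12}\\&+4656778296665388277933286028092539858012767959121920000k^{10}\\&+144475786697302680271016689740018636544036558347226316800k^8\\&+2305862812061518538327375046497265994061106944720616030208k^6\\&+14131109130840787698067340120866948829204788093469111353344k^4\\&-27802797644590317388762803455393575731200000000000000000000k^2\\&+9774552621457470122500000000000000000000000000000000000000,\end{aligned}$$ and $$\begin{aligned}p_2(t)=\;&91750400t^{20}-857210880t^{19}+3560046592t^{18}-8616673280t^{17}+13364330496t^{16}\\&-13704527872t^{15}+9174425600t^{14}-3719282688t^{13}+689182720t^{12}+53528576t^{11}\\&-36429312t^{10}+533760t^9+207104t^8+75520t^7+32352t^6+11376t^5-320t^4\\&-104t^3-30t^2-7t-1.\end{aligned}$$ Let $k_0\approx 0.6898369707\in\left(\frac12,\frac{9}{13}\right)$ be the root of $p_4(k)=0$ in that interval, and let $t_1\approx 0.5194285605\in\left(\frac12,\frac35\right)$ be the root of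 $p_2(t)=0$ in that interval. If $k\le k_0$, then for every triangle $$p\ \ge\ 3\sqrt{3}\,r+k\left[1-\left(\frac{2r}{R}\right)^{5}\right]r.$$ Equality holds if and only if $a:b:c=1:1:1$ (for any $k\le k_0$), or $k=k_0$ and $a:b:c=2t_1:1:1$.
   Context: For a triangle $ABC$, $a,b,c$ denote the side lengths, $p=\frac{a+b+c}{2}$ the semi-perimeter, $R$ the circumradius and $r$ the inradius. *)

(* Defs.v *)
From Stdlib Require Import Reals Lra.
Open Scope R_scope.

Definition is_triangle (a b c : R) : Prop :=
  0 < a /\ 0 < b /\ 0 < c /\ a < b + c /\ b < c + a /\ c < a + b.

Definition semiper (a b c : R) : R := (a + b + c) / 2.

Definition area (a b c : R) : R :=
  let p := semiper a b c in sqrt (p * (p - a) * (p - b) * (p - c)).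

Definition inradius (a b c : R) : R := area a b c / semiper a b c.

Definition circumradius (a b c : R) : R := a * b * c / (4 * area a b c).

Definition p4 (k : R) : R :=
  582076609134674072265625 * k ^ 40
  - 347825698554515838623046875 * k ^ 38
  + 100074581801891326904296875000 * k ^ 36
  - 18656729921698570251464843750000 * k ^ 34
  + 2406402165103435516357421875000000 * k ^ 32
  - 223881811253170562744140625000000000 * k ^ 30
  + 13463175828870323610839843750000000000 * k ^ 28
  - 546554928845186341347265625000000000000 * k ^ 26
  + 44602844570033253018161875000000000000000 * k ^ 24
  - 5130242398470886015317438950000000000000000 * k ^ 22
  + 805214383330095009369880969748800000000000000 * k ^ 20
  + 8091804003905867976154901735852032000000000000 * k ^ 18
  - 262076670696960781271382283372767764480000000000 * k ^ 16
  + 483089080872113925346827615868453187944448000000000 * k ^ 14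
  + 76133654804831682593043073614469922630706135040000000 * k ^ 12
  + 4656778296665388277933286028092539858012767959121920000 * k ^ 10
  + 144475786697302680271016689740018636544036558347226316800 * k ^ 8
  + 2305862812061518538327375046497265994061106944720616030208 * k ^ 6
  + 14131109130840787698067340120866948829204788093469111353344 * k ^ 4
  - 27802797644590317388762803455393575731200000000000000000000 * k ^ 2
  + 9774552621457470122500000000000000000000000000000000000000.

Definition p2 (t : R) : R :=
  91750400 * t ^ 20 - 857210880 * t ^ 19 + 3560046592 * t ^ 18
  - 8616673280 * t ^ 17 + 13364330496 * t ^ 16
  - 13704527872 * t ^ 15 + 9174425600 * t ^ 14 - 3719282688 * t ^ 13
  + 689182720 * t ^ 12 + 53528576 * t ^ 11
  - 36429312 * t ^ 10 + 533760 * t ^ 9 + 207104 * t ^ 8 + 75520 * t ^ 7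
  + 32352 * t ^ 6 + 11376 * t ^ 5 - 320 * t ^ 4
  - 104 * t ^ 3 - 30 * t ^ 2 - 7 * t - 1.

(* a:b:c = 2t:1:1 up to relabelling of the sides (isosceles triangle whose
   base-to-leg ratio is 2t). *)
Definition ratio_2t11 (t a b c : R) : Prop :=
  (a = 2 * t * b /\ b = c) \/ (b = 2 * t * c /\ c = a) \/ (c = 2 * t * a /\ a = b).

(* Main.v *)
Require Import Defs.
From Stdlib Require Import Reals Lra Lia Psatz ZArith List Bool.
Import ListNotations.
Open Scope R_scope.

Fixpoint mono (bs : list R) (es : list nat) : R :=
  match bs, es with
  | b :: bs', e :: es' => b ^ e * mono bs' es'
  | _, _ => 1
  end.
Fixpoint tsum (bs : list R) (l : list (Z * list nat)) : R :=
  match l with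
  | nil => 0
  | (c, es) :: t => IZR c * mono bs es + tsum bs t
  end.
Lemma mono_nonneg : forall bs es, Forall (fun b => 0 <= b) bs -> 0 <= mono bs es.
Proof.
  induction bs as [|b bs IH]; intros es H; destruct es; simpl; try lra.
  inversion H; subst. apply Rmult_le_pos; [apply pow_le; auto | auto].
Qed.
Lemma tsum_nonneg : forall bs l, Forall (fun b => 0 <= b) bs ->
  forallb (fun ce => Z.leb 0 (fst ce)) l = true -> 0 <= tsum bs l.
Proof.
  intros bs l Hb; induction l as [|[c es] t IH]; simpl; intros H; try lra.
  apply andb_true_iff in H as [H1 H2]. apply Zle_bool_imp_le in H1.
  apply Rplus_le_le_0_compat; [apply Rmult_le_pos; [apply IZR_le; auto| apply mono_nonneg; auto] | auto].
Qed.
Fixpoint pev (l : list Z) (x : R) : R :=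
  match l with nil => 0 | c :: t => IZR c + x * pev t x end.
Lemma pev_mono : forall l x y, forallb (Z.leb 0) l = true -> 0 <= x <= y ->
  0 <= pev l x <= pev l y.
Proof.
  induction l as [|c t IH]; intros x y H Hxy; simpl in *; try lra.
  apply andb_true_iff in H as [H1 H2]. apply Zle_bool_imp_le in H1. apply IZR_le in H1.
  destruct (IH x y H2 Hxy) as [A B]. split.
  - assert (0 <= x * pev t x) by (apply Rmult_le_pos; lra). lra.
  - assert (x * pev t x <= y * pev t y).
    { apply Rle_trans with (x * pev t y). apply Rmult_le_compat_l; lra.
      apply Rmult_le_compat_r; lra. }
    lra.
Qed.
Lemma pev_strict : forall c l x y, forallb (Z.leb 0) l = true -> 0 <= x < y -> 0 < pev l y ->
  pev (c :: l) x < pev (c :: l) y.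
Proof.
  intros c l x y H Hxy Hp. simpl.
  destruct (pev_mono l x y H ltac:(lra)) as [A B].
  assert (x * pev l x <= x * pev l y) by (apply Rmult_le_compat_l; lra).
  assert (x * pev l y < y * pev l y) by (apply Rmult_lt_compat_r; lra).
  lra.
Qed.
Fixpoint dpev (l : list Z) (x : R) : R :=
  match l with nil => 0 | c :: t => pev t x + x * dpev t x end.
Lemma pev_deriv : forall l x, derivable_pt_lim (pev l) x (dpev l x).
Proof.
  induction l as [|c t IH]; intros x.
  - exact (derivable_pt_lim_const 0 x).
  - pose proof (derivable_pt_lim_plus _ _ x _ _ (derivable_pt_lim_const (IZR c) x)
      (derivable_pt_lim_mult id (pev t) x _ _ (derivable_pt_lim_id x) (IH x))) as H.
    replace (dpev (c :: t) x) with (0 + (1 * pev t x + id x * dpev t x)) by (unfold id; simpl; ring).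
    exact H.
Qed.
Lemma pev_pos_head : forall c t x, (0 < c)%Z -> forallb (Z.leb 0) t = true -> 0 <= x -> 0 < pev (c::t) x.
Proof.
  intros c t x Hc Ht Hx. simpl. apply IZR_lt in Hc.
  destruct (pev_mono t x x Ht ltac:(lra)) as [A _].
  assert (0 <= x * pev t x) by (apply Rmult_le_pos; lra). lra.
Qed.
Lemma step_lemma : forall M c e d d' dz P Z A A', M <> 0 -> dz <> 0 -> d <> 0 -> d' <> 0 ->
  c*(dz*d') = M -> e*d = M -> M*P + c*Z*A' = e*A -> P + Z/dz*(A'/d') = A/d.
Proof.
  intros M c e d d' dz P Z A A' HM Hdz Hd Hd' Hc He H.
  assert (Hc0 : c <> 0) by (intro h; apply HM; rewrite <- Hc, h; ring).
  assert (He0 : e <> 0) by (intro h; apply HM; rewrite <- He, h; ring).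
  replace (P + Z/dz*(A'/d')) with ((M*P + c*Z*A')/M) by (rewrite <- Hc; field; repeat split; auto).
  rewrite H, <- He. field. repeat split; auto.
Qed.
Definition gf (v:R) := (-163840)*v^0 + (-502443)*v^1 + (1933311)*v^2 + (6946803)*v^3 + (-7580367)*v^4 + (-37224684)*v^5 + (6487452)*v^6 + (94063356)*v^7 + (26437428)*v^8 + (-103501962)*v^9 + (-56876094)*v^10 + (22950378)*v^11 + (16538094)*v^12 + (11363652)*v^13 + (7427052)*v^14 + (4487724)*v^15 + (2545668)*v^16 + (1240029)*v^17 + (570807)*v^18 + (177147)*v^19 + (59049)*v^20.
Definition hf (v:R) := (6)*v^1 + (6)*v^2 + (162)*v^3 + (162)*v^4 + (1944)*v^5 + (1944)*v^6 + (13608)*v^7 + (13608)*v^8 + (61236)*v^9 + (61236)*v^10 + (183708)*v^11 + (183708)*v^12 + (367416)*v^13 + (367416)*v^14 + (472392)*v^15 + (472392)*v^16 + (354294)*v^17 + (354294)*v^18 + (118098)*v^19 + (118098)*v^20.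
Definition NUMf (v:R) := (1)*v^0 + (2)*v^1 + (30)*v^2 + (60)*v^3 + (405)*v^4 + (810)*v^5 + (3240)*v^6 + (6480)*v^7 + (17010)*v^8 + (34020)*v^9 + (61236)*v^10 + (122472)*v^11 + (153090)*v^12 + (306180)*v^13 + (262440)*v^14 + (524880)*v^15 + (295245)*v^16 + (590490)*v^17 + (196830)*v^18 + (393660)*v^19 + (59049)*v^20 + (118098)*v^21.
Definition DENf (v:R) := (-10923)*v^0 + (-21846)*v^1 + (163830)*v^2 + (349506)*v^3 + (-939483)*v^4 + (-2228472)*v^5 + (2380104)*v^6 + (6988680)*v^7 + (-1676214)*v^8 + (-10341108)*v^9 + (-3084156)*v^10 + (4172796)*v^11 + (3477330)*v^12 + (2781864)*v^13 + (2152008)*v^14 + (1522152)*v^15 + (1056321)*v^16 + (590490)*v^17 + (354294)*v^18 + (118098)*v^19 + (59049)*v^20.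
Definition Pf (K:R) := (9774552621457470122500000000000000000000000000000000000000)*K^0 + (-27802797644590317388762803455393575731200000000000000000000)*K^1 + (14131109130840787698067340120866948829204788093469111353344)*K^2 + (2305862812061518538327375046497265994061106944720616030208)*K^3 + (144475786697302680271016689740018636544036558347226316800)*K^4 + (4656778296665388277933286028092539858012767959121920000)*K^5 + (76133654804831682593043073614469922630706135040000000)*K^6 + (483089080872113925346827615868453187944448000000000)*K^7 + (-262076670696960781271382283372767764480000000000)*K^8 + (8091804003905867976154901735852032000000000000)*K^9 + (805214383330095009369880969748800000000000000)*K^10 + (-5130242398470886015317438950000000000000000)*K^11 + (44602844570033253018161875000000000000000)*K^12 + (-546554928845186341347265625000000000000)*K^13 + (13463175828870323610839843750000000000)*K^14 + (-223881811253170562744140625000000000)*K^15 + (2406402165103435516357421875000000)*K^16 + (-18656729921698570251464843750000)*K^17 + (100074581801891326904296875000)*K^18 + (-347825698554515838623046875)*K^19 + (582076609134674072265625)*K^20.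
Lemma Pf_horner : forall K, Pf K = (9774552621457470122500000000000000000000000000000000000000) + K * ((-27802797644590317388762803455393575731200000000000000000000) + K * ((14131109130840787698067340120866948829204788093469111353344) + K * ((2305862812061518538327375046497265994061106944720616030208) + K * ((144475786697302680271016689740018636544036558347226316800) + K * ((4656778296665388277933286028092539858012767959121920000) + K * ((76133654804831682593043073614469922630706135040000000) + K * ((483089080872113925346827615868453187944448000000000) + K * ((-262076670696960781271382283372767764480000000000) + K * ((8091804003905867976154901735852032000000000000) + K * ((805214383330095009369880969748800000000000000) + K * ((-5130242398470886015317438950000000000000000) + K * ((44602844570033253018161875000000000000000) + K * ((-546554928845186341347265625000000000000) + K * ((13463175828870323610839843750000000000) + K * ((-223881811253170562744140625000000000) + K * ((2406402165103435516357421875000000) + K * ((-18656729921698570251464843750000) + K * ((100074581801891326904296875000) + K * ((-347825698554515838623046875) + K * (582076609134674072265625)))))))))))))))))))).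
Proof. intros; unfold Pf; ring. Qed.
Lemma p4_Pf : forall k, p4 k = Pf (k^2).
Proof. intros; unfold p4, Pf; ring. Qed.
Lemma NUMf_eq : forall v, NUMf v = (2*v+1)*(3*v^2+1)^10.
Proof. intros; unfold NUMf; ring. Qed.
Definition Mf (Y:R) := Y^8 + 8*(Y-2)*Y^6 + 64*(Y-2)^2*Y^4 + 512*(Y-2)^3*Y^2 + 4096*(Y-2)^4.
Lemma DENf_eq : forall v, DENf v = 3*(3*v^2-1)*(v+1)^2*Mf (3*v^2+1).
Proof. intros; unfold DENf, Mf; ring. Qed.
Lemma p2_g : forall v, 3*v^2+1 <> 0 -> p2 ((3*v^2-1)/(3*v^2+1)) * (3*v^2+1)^20 * 59049^2 = 6973568802 * gf v * gf (-v).
Proof. intros v Hv. unfold p2, gf. field. auto. Qed.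
Definition LNUM : list Z := [1%Z; 2%Z; 30%Z; 60%Z; 405%Z; 810%Z; 3240%Z; 6480%Z; 17010%Z; 34020%Z; 61236%Z; 122472%Z; 153090%Z; 306180%Z; 262440%Z; 524880%Z; 295245%Z; 590490%Z; 196830%Z; 393660%Z; 59049%Z; 118098%Z].
Definition LDEN : list Z := [(-10923)%Z; (-21846)%Z; 163830%Z; 349506%Z; (-939483)%Z; (-2228472)%Z; 2380104%Z; 6988680%Z; (-1676214)%Z; (-10341108)%Z; (-3084156)%Z; 4172796%Z; 3477330%Z; 2781864%Z; 2152008%Z; 1522152%Z; 1056321%Z; 590490%Z; 354294%Z; 118098%Z; 59049%Z].
Lemma NUM_pev : forall v, NUMf v = pev LNUM v.
Proof. intros; unfold NUMf, LNUM; cbn [pev]; ring. Qed.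
Lemma DEN_pev : forall v, DENf v = pev LDEN v.
Proof. intros; unfold DENf, LDEN; cbn [pev]; ring. Qed.
Lemma C_id : forall v, dpev LNUM v * pev LDEN v - dpev LDEN v * pev LNUM v = gf v * hf v.
Proof. intros; unfold LNUM, LDEN, gf, hf; cbn [dpev pev]; ring. Qed.
Definition Lhs : list Z := [3145728%Z; 47185920%Z; 341311488%Z; 1581907968%Z; 5265948672%Z; 13377208320%Z; 26897743872%Z; 43822301184%Z; 58739281920%Z; 65402007552%Z; 60811057152%Z; 47294627328%Z; 30710098944%Z; 16557654528%Z; 7339921920%Z; 2634057792%Z; 747324144%Z; 161558064%Z; 25036776%Z; 2480058%Z; 118098%Z].
Lemma h_shift : forall s, hf (1+s) = pev Lhs s.
Proof. intros; unfold hf, Lhs; cbn [pev]; ring. Qed.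
Definition Lgs : list Z := [(-2621440)%Z; 62914560%Z; 1122631680%Z; 7381647360%Z; 27810201600%Z; 69414174720%Z; 124339691520%Z; 169201778688%Z; 183028377600%Z; 162985955328%Z; 122201519616%Z; 77875395840%Z; 42149403648%Z; 19237901760%Z; 7318716768%Z; 2281758336%Z; 568707480%Z; 109122552%Z; 15155910%Z; 1358127%Z; 59049%Z].
Lemma g_shift : forall s, gf (1+s) = pev Lgs s.
Proof. intros; unfold gf, Lgs; cbn [pev]; ring. Qed.
Definition LP : list Z := [(-17173442673082785696784214210493170153679068839192286547528082930664414868117243902789856825791912222769035608064)%Z; 804140160131609489323283022706312678500969123962494695578826158573754549597998788707387583668905737052677094768640%Z; 18910146652818317837372038518545225570788202564866330412358127437331686135399081796390064966501865964039003512504320%Z; 183284530892503181856930378711092240217744161551177021625563522040071543539478168933638619211515701937992912716431360%Z; 1085001903337255856670061181861370906739985546236425325659814075389053852150441814145642050877797242479522164926054400%Z; 4480909603614078470331408002535484723923327640432157983119378024873806807299603239565642675307719596861263172195057664%Z; 13798032323042116292459502427459142170899027226817392305745389292051554606667843002397526154496345393211334768847749120%Z; 32933746908456230264431051905682483428276921022572725112854952784895905669967615739539825394958008086739225296408412160%Z; 62427241645828670144360135227296995673159993628077656161451213662299181655947491134901381597289336373715459621393530880%Z; 95429291060837356581898639838121380880948636375665992978783021225248622490597866880382538998092290542905617154048000000%Z; 118726927076698719324561086885060858180705987784819394227262311221366823443062532840224298379136481255723165625012453376%Z; 120747376896361903953652933566727756771541611593029944829262163530857716892748030103079188846008320835061490463284920320%Z;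 100401701281916031788945356623161518887337302628812852021819777643472811757841154378045685537823779805114823005471375360%Z; 67982987918548488521989760703573258039112349390472183884007373650250684470017392903788424703787202763692265583591751680%Z; 37160360389560326029852072229146432625518939811342613337043851208214471309892679898451479638510568868433134821135564800%Z; 16159609803595092482840622965428918044978481643372411439984794509932936018683409187205276531100226986857737951159701504%Z; 5463385213062643474168868135792362721844822920535439526823118421934025139832680194689119433709285000587618083747299840%Z; 1384827314485624447203206974320014511405679036969226592047819043076892143593231611254192442262135728903113996602307520%Z; 247694919195506603028618517616363297982645342376224139663826348656154320174764011362903356940166848729332940567862160%Z; 27886267048983879911006797577999199185255040367711519185227790647184972386503970057731732689233562647755823144671700%Z; 1486718148978644507507934001714955679167461043506963836401437990065300423821011357059786429683840632699762958251981%Z].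
Lemma P_bern : forall K, 676*K-169 <> 0 -> (25442974475239480708299986350370876529198817899402593420501290944126525552826777600000000000000000000) * Pf K = (676*K-169)^20 * pev LP ((324-676*K)/(676*K-169)).
Proof. intros K H. unfold Pf, LP. cbn [pev]. field. auto. Qed.
Definition LNr : list (Z * list nat) := [(1279262720%Z, [1]%nat); (10614865920%Z, [2]%nat); (62495784960%Z, [3]%nat); (272079912960%Z, [4]%nat); (889212764160%Z, [5]%nat); (2226605137920%Z, [6]%nat); (4373975531520%Z, [7]%nat); (6891900401664%Z, [8]%nat); (8869580808192%Z, [9]%nat); (9446232669696%Z, [10]%nat); (8392800407040%Z, [11]%nat); (6242225679360%Z, [12]%nat); (3883424477184%Z, [13]%nat); (2010922565472%Z, [14]%nat); (858524800896%Z, [15]%nat); (297608272200%Z, [16]%nat); (81818294400%Z, [17]%nat); (17195895486%Z, [18]%nat); (2599848738%Z, [19]%nat); (252198279%Z, [20]%nat); (11809800%Z, [21]%nat)].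
Definition LN : list (Z * list nat) := (86507520%Z, [0]%nat) :: LNr.
Lemma N_lb : forall s, 100 * NUMf (1+s) - 29 * DENf (1+s) = tsum [s] LN.
Proof. intros. unfold NUMf, DENf, LN, LNr. cbn [tsum mono]. ring. Qed.
Definition Lgr : list (Z * list nat) := [(5825000000000000000000%Z, [1; 19]%nat); (64360000000000000000000%Z, [2; 18]%nat); (448374750000000000000000%Z, [3; 17]%nat); (2208960750000000000000000%Z, [4; 16]%nat); (8180626380000000000000000%Z, [5; 15]%nat); (23630466358500000000000000%Z, [6; 14]%nat); (54519455977950000000000000%Z, [7; 13]%nat); (102038439198277500000000000%Z, [8; 12]%nat); (156450589576965500000000000%Z, [9; 11]%nat); (197590524164390335000000000%Z, [10; 10]%nat); (205919189602230084500000000%Z, [11; 9]%nat); (176772210418815000000000000%Z, [12; 8]%nat); (124323752943826727565000000%Z, [13; 7]%nat); (70934891781653311033500000%Z, [14; 6]%nat); (32329752301639603300200000%Z, [15; 5]%nat); (11494379186306498251245000%Z, [16; 4]%nat); (3072443243156312140702500%Z, [17; 3]%nat); (580867482873060068529400%Z, [18; 2]%nat); (69256019150022959912135%Z, [19; 1]%nat)].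
Definition Lg : list (Z * list nat) := (250000000000000000000%Z, [0;20]%nat) :: (3916454102546112481186%Z, [20;0]%nat) :: Lgr.
Lemma gneg_bern : forall w, - (95367431640625) * gf (-w) = tsum [5*w-5; 6-5*w] Lg.
Proof. intros. unfold gf, Lg, Lgr. cbn [tsum mono]. ring. Qed.
Lemma phi_vr : 3 * (NUMf (103/100) / DENf (103/100))^2 < 81/169.
Proof. replace (NUMf (103/100)) with (2507601924040076706535209248362407961399528479297/500000000000000000000000000000000000000000) by (unfold NUMf; field). replace (DENf (103/100)) with (125913966044949124334998601166951966465143577249/10000000000000000000000000000000000000000) by (unfold DENf; field). lra. Qed.
Definition PsiF (w:R) := (1470720)*w^0 + (2064131)*w^1 + (-20512764)*w^2 + (-27337617)*w^3 + (110887056)*w^4 + (139303800)*w^5 + (-284096160)*w^6 + (-331347024)*w^7 + (320725008)*w^8 + (334038006)*w^9 + (-78469560)*w^10 + (-57580794)*w^11 + (-39995856)*w^12 + (-26943840)*w^13 + (-16376256)*w^14 + (-9815256)*w^15 + (-4723920)*w^16 + (-2421009)*w^17 + (-708588)*w^18 + (-295245)*w^19.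
Definition LpsiF (w:R) := (98051)*w^0 + (33025)*w^1 + (-1507239)*w^2 + (-589797)*w^3 + (9176220)*w^4 + (4194612)*w^5 + (-27319356)*w^6 + (-14612724)*w^7 + (37958058)*w^8 + (24088590)*w^9 + (-13485042)*w^10 + (-11551734)*w^11 + (-9159156)*w^12 + (-7532028)*w^13 + (-5117580)*w^14 + (-4015332)*w^15 + (-2027349)*w^16 + (-1515591)*w^17 + (-413343)*w^18 + (-295245)*w^19.
Lemma psi_id : forall w, (1) * DENf w * PsiF w - (1280) * NUMf w = gf w * LpsiF w.
Proof. intros; unfold DENf, PsiF, NUMf, gf, LpsiF; ring. Qed.
Definition ePsi : R := 1280.
Definition ZF (w:R) := (-6838080)*w^0 + (-21096846)*w^1 + (82673814)*w^2 + (256681953)*w^3 + (-387076158)*w^4 + (-1177364646)*w^5 + (872709714)*w^6 + (2449948842)*w^7 + (-908507502)*w^8 + (-2025192618)*w^9 + (262998414)*w^10 + (201527676)*w^11 + (142841718)*w^12 + (102233502)*w^13 + (62500086)*w^14 + (40980006)*w^15 + (19249974)*w^16 + (11337408)*w^17 + (3070548)*w^18 + (1594323)*w^19.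
Definition QzF (w:R) := (-39648768)*w^0 + (10284975)*w^1 + (527910939)*w^2 + (-154103796)*w^3 + (-2640410460)*w^4 + (766403532)*w^5 + (6018035940)*w^6 + (-1538746956)*w^7 + (-5516083476)*w^8 + (797358330)*w^9 + (602137962)*w^10 + (415626228)*w^11 + (295166268)*w^12 + (174548844)*w^13 + (115184916)*w^14 + (51726924)*w^15 + (31414068)*w^16 + (7971615)*w^17 + (4428675)*w^18.
Definition dZ : R := 1600.
Lemma z_id : forall w, (1) * (3 * PsiF w ^ 2) = (1024) * ZF w + gf w * QzF w.
Proof. intros; unfold PsiF, ZF, gf, QzF; ring. Qed.
Definition AF19 (w:R) := (-181472301483154296875000000000)*w^0 + (-491199223324656486511230468750)*w^1 + (1924899732694029808044433593750)*w^2 + (5976342433132231235504150390625)*w^3 + (-9012319101020693778991699218750)*w^4 + (-27412656834349036216735839843750)*w^5 + (20319356443360447883605957031250)*w^6 + (57042316580191254615783691406250)*w^7 + (-21152838645502924919128417968750)*w^8 + (-47152690077200531959533691406250)*w^9 + (6123409001156687736511230468750)*w^10 + (4692181851714849472045898437500)*w^11 + (3325792914256453514099121093750)*w^12 + (2380309207364916801452636718750)*w^13 + (1455193525180220603942871093750)*w^14 + (954140117391943931579589843750)*w^15 + (448198383674025535583496093750)*w^16 + (263969600200653076171875000000)*w^17 + (71491766721010208129882812500)*w^18 + (37120725028216838836669921875)*w^19.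
Definition QF19 (w:R) := 0.
Lemma stepZ19 : forall w, (1600) * (-347825698554515838623046875) + (1) * ZF w * (582076609134674072265625) = (25) * AF19 w + gf w * QF19 w.
Proof. intros; unfold ZF, gf, QF19, AF19; ring. Qed.
Definition AF18 (w:R) := (135194901466369628906250000000000)*w^0 + (312705381251871585845947265625000)*w^1 + (-1703351578546687960624694824218750)*w^2 + (-3950702145592309534549713134765625)*w^3 + (8775113375851884484291076660156250)*w^4 + (18924261794524267315864562988281250)*w^5 + (-21685953671028837561607360839843750)*w^6 + (-41556337899668142199516296386718750)*w^7 + (24157315428877249360084533691406250)*w^8 + (37298992363790050148963928222656250)*w^9 + (-6483897881241515278816223144531250)*w^10 + (-4847493254318833351135253906250000)*w^11 + (-3394425674306228756904602050781250)*w^12 + (-2351012651273980736732482910156250)*w^13 + (-1430729714753106236457824707031250)*w^14 + (-895967486785724759101867675781250)*w^15 + (-425144268678501248359680175781250)*w^16 + (-234211977208033204078674316406250)*w^17 + (-65634721241891384124755859375000)*w^18 + (-30876029192470014095306396484375)*w^19.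
Definition QF18 (w:R) := (-6316271424293518066406250000000)*w^0 + (-21444444637745618820190429687500)*w^1 + (83256853278726339340209960937500)*w^2 + (214699574746191501617431640625000)*w^3 + (-444389736559242010116577148437500)*w^4 + (-762077435175888240337371826171875)*w^5 + (1242229368374682962894439697265625)*w^6 + (855726404814049601554870605468750)*w^7 + (-1400163026293739676475524902343750)*w^8 + (62201350531540811061859130859375)*w^9 + (58314520376734435558319091796875)*w^10 + (35454416926950216293334960937500)*w^11 + (34724223241209983825683593750000)*w^12 + (16216257470659911632537841796875)*w^13 + (16801023459993302822113037109375)*w^14 + (5188652453944087028503417968750)*w^15 + (5722091021016240119934082031250)*w^16 + (853776675648987293243408203125)*w^17 + (1002259575761854648590087890625)*w^18.
Lemma stepZ18 : forall w, (102400) * (100074581801891326904296875000) + (1) * ZF w * AF19 w = (1600) * AF18 w + gf w * QF18 w.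
Proof. intros; unfold ZF, gf, QF18, AF19, AF18; ring. Qed.
Definition AF17 (w:R) := (-24198415883255004882812500000000000)*w^0 + (-48270741500617526471614837646484375)*w^1 + (325056481405489370226860046386718750)*w^2 + (624964934464778490364551544189453125)*w^3 + (-1740243940627352446317672729492187500)*w^4 + (-3079453284576777666807174682617187500)*w^5 + (4440553306794929355382919311523437500)*w^6 + (6996727763658915013074874877929687500)*w^7 + (-5045308935965939015150070190429687500)*w^8 + (-6594441854349754527211189270019531250)*w^9 + (1312050651134686768054962158203125000)*w^10 + (971851550018761083483695983886718750)*w^11 + (677467212956219762563705444335937500)*w^12 + (463067470298557430505752563476562500)*w^13 + (281367401552418619394302368164062500)*w^14 + (172735320093176811933517456054687500)*w^15 + (82374179702623933553695678710937500)*w^16 + (43988596673134602606296539306640625)*w^17 + (12537561816426292061805725097656250)*w^18 + (5611517809271402657032012939453125)*w^19.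
Definition QF17 (w:R) := (5181573914408683776855468750000000)*w^0 + (13626577847734093666076660156250000)*w^1 + (-73342524994980543851852416992187500)*w^2 + (-136200494382189586758613586425781250)*w^3 + (402821369484627619385719299316406250)*w^4 + (472086325198355130851268768310546875)*w^5 + (-1084124324796893633902072906494140625)*w^6 + (-493923569195050746202468872070312500)*w^7 + (1143098498077757656574249267578125000)*w^8 + (-69243212922940962016582489013671875)*w^9 + (-59863235929875634610652923583984375)*w^10 + (-38551229195611551403999328613281250)*w^11 + (-33679285194916650652885437011718750)*w^12 + (-17252435985180549323558807373046875)*w^13 + (-15392995625800453126430511474609375)*w^14 + (-5415324469484388828277587890625000)*w^15 + (-4976084994066506624221801757812500)*w^16 + (-876732626949436962604522705078125)*w^17 + (-833652788196690380573272705078125)*w^18.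
Lemma stepZ17 : forall w, (102400) * (-18656729921698570251464843750000) + (1) * ZF w * AF18 w = (3200) * AF17 w + gf w * QF17 w.
Proof. intros; unfold ZF, gf, QF17, AF18, AF17; ring. Qed.
Definition AF16 (w:R) := (2486095511446350097656250000000000000)*w^0 + (4531051852766614012420177459716796875)*w^1 + (-34246221135379875710606575012207031250)*w^2 + (-59323887220451582211256027221679687500)*w^3 + (185921460345693922564387321472167968750)*w^4 + (296265821601673325505852699279785156250)*w^5 + (-479289512735480540147423744201660156250)*w^6 + (-684339731958823528513312339782714843750)*w^7 + (546863936058368855211138725280761718750)*w^8 + (660325836057909949994087219238281250000)*w^9 + (-139645210304395122072100639343261718750)*w^10 + (-103048304273905528172850608825683593750)*w^11 + (-71720138280630008849501609802246093750)*w^12 + (-48747810521898896661400794982910156250)*w^13 + (-29613526436805510780215263366699218750)*w^14 + (-18019007498874247696995735168457031250)*w^15 + (-8617715744578871449828147888183593750)*w^16 + (-4535054481137817554175853729248046875)*w^17 + (-1303949019386163890361785888671875000)*w^18 + (-569489849027377447485923767089843750)*w^19.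
Definition QF16 (w:R) := (-962148473127400875091552734375000000)*w^0 + (-2091463099127952083945274353027343750)*w^1 + (13953234973164693564176559448242187500)*w^2 + (20784933517641559280455112457275390625)*w^3 + (-77350437349142359904944896697998046875)*w^4 + (-69911521911931621246039867401123046875)*w^5 + (202891647610730793066322803497314453125)*w^6 + (68187062645402996130287647247314453125)*w^7 + (-205690714729536975882947444915771484375)*w^8 + (14268022433303892798721790313720703125)*w^9 + (11967489330084282495081424713134765625)*w^10 + (7881588437547108046710491180419921875)*w^11 + (6580400937356111370027065277099609375)*w^12 + (3501216148919267021119594573974609375)*w^13 + (2933416591565293036401271820068359375)*w^14 + (1091807399942968748509883880615234375)*w^15 + (925110138065157048404216766357421875)*w^16 + (175780152574639208614826202392578125)*w^17 + (151510980850327871739864349365234375)*w^18.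
Lemma stepZ16 : forall w, (51200) * (2406402165103435516357421875000000) + (1) * ZF w * AF17 w = (3200) * AF16 w + gf w * QF16 w.
Proof. intros; unfold ZF, gf, QF16, AF17, AF16; ring. Qed.
Definition AF15 (w:R) := (-82427097968478273681640625000000000000)*w^0 + (-139262453929900475713312625885009765625)*w^1 + (1155117735900691553439259529113769531250)*w^2 + (1842698289054826850525736808776855468750)*w^3 + (-6336946202436581040339589118957519531250)*w^4 + (-9315411434451277560272812843322753906250)*w^5 + (16455954998812036721545100212097167968750)*w^6 + (21831610652029160560829043388366699218750)*w^7 + (-18830285933381191138648152351379394531250)*w^8 + (-21476280025023684370690584182739257812500)*w^9 + (4750581105613525638006091117858886718750)*w^10 + (3496449421082092967932820320129394531250)*w^11 + (2430682276298618861780762672424316406250)*w^12 + (1645618746373631329212784767150878906250)*w^13 + (999469115107991680453419685363769531250)*w^14 + (604312628966172204256653785705566406250)*w^15 + (289588863077554156030297279357910156250)*w^16 + (150791873248810215056240558624267578125)*w^17 + (43629524720298570937156677246093750000)*w^18 + (18713702390703471887111663818359375000)*w^19.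
Definition QF15 (w:R) := (100575671034429186344146728515625000000)*w^0 + (195359177325061929318308830261230468750)*w^1 + (-1467544806182038879519701004028320312500)*w^2 + (-1924826816266441305617988109588623046875)*w^3 + (8144492751160879897056519985198974609375)*w^4 + (6295657322317643631783127784729003906250)*w^5 + (-20996505517082401654815673828125000000000)*w^6 + (-5791348035999869430179893970489501953125)*w^7 + (20775974924676201992864906787872314453125)*w^8 + (-1530000555894621681225299835205078125000)*w^9 + (-1266741808214156915339827537536621093750)*w^10 + (-843006539803802531142532825469970703125)*w^11 + (-689892927637975090120732784271240234375)*w^12 + (-373620966169645526012778282165527343750)*w^13 + (-304231249560880791717767715454101562500)*w^14 + (-116280309713848900870978832244873046875)*w^15 + (-94882766711015115197002887725830078125)*w^16 + (-18691417901632479062676429748535156250)*w^17 + (-15376225923739191082119941711425781250)*w^18.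
Lemma stepZ15 : forall w, (25600) * (-223881811253170562744140625000000000) + (1) * ZF w * AF16 w = (6400) * AF15 w + gf w * QF15 w.
Proof. intros; unfold ZF, gf, QF15, AF16, AF15; ring. Qed.
Definition AF14 (w:R) := (7557336277218536702304687500000000000000)*w^0 + (11994798338665930679498691558837890625000)*w^1 + (-107283896109871919878579974174499511718750)*w^2 + (-160031040032031899990065662860870361328125)*w^3 + (593240280986861558510278544425964355468750)*w^4 + (817587031400832246726949524879455566406250)*w^5 + (-1549451755487813755154335398674011230468750)*w^6 + (-1941178726170981450884592833518981933593750)*w^7 + (1777835364295648303671775517463684082031250)*w^8 + (1941965625284576429773166298866271972656250)*w^9 + (-445077977144523113903217673301696777343750)*w^10 + (-326929038652777057576845474243164062500000)*w^11 + (-227057145041928235660508837699890136718750)*w^12 + (-153263474445595745168987889289855957031250)*w^13 + (-93056822839702826229226040840148925781250)*w^14 + (-55996279968915552676032471656799316406250)*w^15 + (-26869404818269618565449948310852050781250)*w^16 + (-13878883260476169682077584266662597656250)*w^17 + (-4034222280232436711248884201049804687500)*w^18 + (-1706433588410765115538966655731201171875)*w^19.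
Definition QF14 (w:R) := (-3366928200427533111843109130859375000000)*w^0 + (-5983632872849098698560357093811035156250)*w^1 + (49443435064896951814532518386840820312500)*w^2 + (58499745591567783949347317218780517578125)*w^3 + (-274740303672721330332881033420562744140625)*w^4 + (-186580490670165478228000402450561523437500)*w^5 + (699436015405975570183202147483825683593750)*w^6 + (162391450239816069071375548839569091796875)*w^7 + (-680242416973266665197644889354705810546875)*w^8 + (52316040951104991870331406593322753906250)*w^9 + (42931782997964857430192470550537109375000)*w^10 + (28773673953285408291528403759002685546875)*w^11 + (23223391705845629957349121570587158203125)*w^12 + (12731572269120504148138761520385742187500)*w^13 + (10161141296934781734302401542663574218750)*w^14 + (3956798788780189332044899463653564453125)*w^15 + (3142971003861879743308961391448974609375)*w^16 + (635299798117660730576992034912109375000)*w^17 + (505269964548993740952014923095703125000)*w^18.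
Lemma stepZ14 : forall w, (6400) * (13463175828870323610839843750000000000) + (1) * ZF w * AF15 w = (1600) * AF14 w + gf w * QF14 w.
Proof. intros; unfold ZF, gf, QF14, AF15, AF14; ring. Qed.
Definition AF13 (w:R) := (-256400758852030212263753125000000000000000)*w^0 + (-360551668518936921167232650470733642578125)*w^1 + (3704176355965068145895762813186645507812500)*w^2 + (4900262761502506940741457404994964599609375)*w^3 + (-20748869244167145394640810092163085937500000)*w^4 + (-25592661785744228423230644884490966796875000)*w^5 + (54744664688802178051447380684471130371093750)*w^6 + (62339451324739471461185894527816772460937500)*w^7 + (-63202243924741511085393186464309692382812500)*w^8 + (-64362615470797932198171194713783264160156250)*w^9 + (15672783163581324240667490260505676269531250)*w^10 + (11474365342218905706584594253730773925781250)*w^11 + (7955228589403623345837502906036376953125000)*w^12 + (5343454306637480749708930558776855468750000)*w^13 + (3242016612706158832271501426124572753906250)*w^14 + (1935636444983845248754110187911987304687500)*w^15 + (930538432824778230018248429489135742187500)*w^16 + (474350424250871889593185671901702880859375)*w^17 + (138880338204346639253765505409240722656250)*w^18 + (57405895825206644606946518611907958984375)*w^19.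
Definition QF13 (w:R) := (310428989097538110147926330566406250000000)*w^0 + (514713820348892612243326148986816406250000)*w^1 + (-4589614727994626861621591062545776367187500)*w^2 + (-4979570883593066101486278748512268066406250)*w^3 + (25520696731813690624623461308479309082031250)*w^4 + (15520877976765210480453196313381195068359375)*w^5 + (-64369516853009010682915655500888824462890625)*w^6 + (-12820927602062220818793352088928222656250000)*w^7 + (61846270408761575085039760551452636718750000)*w^8 + (-4920040194220593007990667130947113037109375)*w^9 + (-4011461451132123950745148065090179443359375)*w^10 + (-2701947045612117475586297163963317871093750)*w^11 + (-2158603498535300203950881180763244628906250)*w^12 + (-1193855810146693729624495990276336669921875)*w^13 + (-938696026971759852407091815471649169921875)*w^14 + (-370574623953630086261473731994628906250000)*w^15 + (-288453206497509688869578533172607421875000)*w^16 + (-59437427502363602853089840412139892578125)*w^17 + (-46073706887090658119552099704742431640625)*w^18.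
Lemma stepZ13 : forall w, (6400) * (-546554928845186341347265625000000000000) + (1) * ZF w * AF14 w = (3200) * AF13 w + gf w * QF13 w.
Proof. intros; unfold ZF, gf, QF13, AF14, AF13; ring. Qed.
Definition AF12 (w:R) := (5867084914302740605973618125000000000000000)*w^0 + (7591344803284406877905523868961334228515625)*w^1 + (-83565353946890288694249085645694732666015625)*w^2 + (-101927367695037753025720657747695922851562500)*w^3 + (464981726075156964365507860946628570556640625)*w^4 + (531521992078496794408927332233688354492187500)*w^5 + (-1221344970489440661117125081446826934814453125)*w^6 + (-1304642801292649324631175237346458435058593750)*w^7 + (1404143954549362315500096328423496246337890625)*w^8 + (1368230593948356557622016373099647521972656250)*w^9 + (-344295513198374042420561438235042572021484375)*w^10 + (-251662449799785855439539425672492980957031250)*w^11 + (-174361634756046251172025186413379669189453125)*w^12 + (-116819151155670427790762296771957397460937500)*w^13 + (-70880295898582993939670402095973968505859375)*w^14 + (-42133781141991750917682216289283752441406250)*w^15 + (-20291363076990491441768356728229522705078125)*w^16 + (-10262357134301886195475773059978485107421875)*w^17 + (-3020643519172571402844943648727416992187500)*w^18 + (-1230552184113665437613565908180236816406250)*w^19.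
Definition QF12 (w:R) := (-10587505850022864320965988214111328125000000)*w^0 + (-15446887036601820296280087951850891113281250)*w^1 + (158358212191710679911211417353057861328125000)*w^2 + (146309565589702089986442848101329803466796875)*w^3 + (-881092184256703935554838275585460662841796875)*w^4 + (-436662874492686420868141942939281463623046875)*w^5 + (2193717625436805880232283162525844573974609375)*w^6 + (319203118122247753848451742077159881591796875)*w^7 + (-2069733131621188742472083441655063629150390625)*w^8 + (174311453016078373712992795503902435302734375)*w^9 + (140671810481256199540779515722560882568359375)*w^10 + (95461363535507607290581562455844879150390625)*w^11 + (75036683134564909048787917843151092529296875)*w^12 + (42067139378241872877950331747722625732421875)*w^13 + (32294618534590722817583070634174346923828125)*w^14 + (13026268331902269464622886602115631103515625)*w^15 + (9813237771701208083581850819492340087890625)*w^16 + (2084998152586366566250219606304168701171875)*w^17 + (1549959187280579404387556002521514892578125)*w^18.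
Lemma stepZ12 : forall w, (3200) * (44602844570033253018161875000000000000000) + (1) * ZF w * AF13 w = (3200) * AF12 w + gf w * QF12 w.
Proof. intros; unfold ZF, gf, QF12, AF13, AF12; ring. Qed.
Definition AF11 (w:R) := (-256168521763036077914719251050000000000000000)*w^0 + (-519840300957657342183736192998025817871093750)*w^1 + (3391160378277119179544999193594485321044921875)*w^2 + (6631730327868563577218686081999996948242187500)*w^3 + (-17840902602190711814212990161814958496093750000)*w^4 + (-32301885362449960794511567841344398193359375000)*w^5 + (44992444024566159567180480980258812866210937500)*w^6 + (72935679668281543461892677050521713867187500000)*w^7 + (-50863128779777620901819481514548764648437500000)*w^8 + (-68311342132333762754598966409718128051757812500)*w^9 + (13321301578951256911527786518186087951660156250)*w^10 + (9880613396655049744803798109819749755859375000)*w^11 + (6890216009405490422142723283510656738281250000)*w^12 + (4719337269989332628053722346918780517578125000)*w^13 + (2867123132938224439090227205518619995117187500)*w^14 + (1765839404508782485241010486185859375000000000)*w^15 + (841068038060107171709134117401210937500000000)*w^16 + (451445885752510089101950701283841857910156250)*w^17 + (128267105447889265101823328718849334716796875)*w^18 + (57882734568307757978956062855609741210937500)*w^19.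
Definition QF11 (w:R) := (242419035423657105565533665337158203125000000)*w^0 + (323814197274843469767351666149940490722656250)*w^1 + (-3570119400139194825032991700143836975097656250)*w^2 + (-2924011460957443667695751898363773345947265625)*w^3 + (19596258470534668903861305810435997009277343750)*w^4 + (8157831794070526421100318073981235504150390625)*w^5 + (-47716444191605882603102164796616382598876953125)*w^6 + (-5268584237475641098557307942351799011230468750)*w^7 + (44239936079444635090578292710572673797607421875)*w^8 + (-3841363317210215883846680493910011291503906250)*w^9 + (-3082570204708306041175065366610221862792968750)*w^10 + (-2101948722597550217347832932636997222900390625)*w^11 + (-1636871328779226037563570381616882324218750000)*w^12 + (-925737138692300355155529005648769378662109375)*w^13 + (-700657188060978916181497662763904571533203125)*w^14 + (-286581930828761094758491565279937744140625000)*w^15 + (-211634919884192334472386693153568267822265625)*w^16 + (-45871361678363130186020067178413391113281250)*w^17 + (-33224908971068966815566279520866394042968750)*w^18.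
Lemma stepZ11 : forall w, (1600) * (-5130242398470886015317438950000000000000000) + (1) * ZF w * AF12 w = (1600) * AF11 w + gf w * QF11 w.
Proof. intros; unfold ZF, gf, QF11, AF12, AF11; ring. Qed.
Definition AF10 (w:R) := (81682607132864827701836787820647800000000000000)*w^0 + (123666588140462519790652383858778785992431640625)*w^1 + (-1176597899708895713841143619266354700109863281250)*w^2 + (-1696554898445262464672051729550865040936279296875)*w^3 + (6622289062240943553613036517724602236523437500000)*w^4 + (8898527464110732375809174189583491954809570312500)*w^5 + (-17625489430735711790667733196693029366845703125000)*w^6 + (-21657812786623288605244737380756296882104492187500)*w^7 + (20656153747772621563642413056497239296484375000000)*w^8 + (22263803472506547073574390975408564014636230468750)*w^9 + (-5286780450887348979302368134055668994116210937500)*w^10 + (-3874326267353306561464970815158786898205566406250)*w^11 + (-2683822395475411610765860948662997848632812500000)*w^12 + (-1806793348790601523001362448729913060717773437500)*w^13 + (-1094048783819089304878187407534312865478515625000)*w^14 + (-656332479844987529062489628722822793920898437500)*w^15 + (-314150114967572183457932997403996082812500000000)*w^16 + (-161657624311025862702072469103416847845458984375)*w^17 + (-46910724867734471992983403859044675012207031250)*w^18 + (-19738665494542618179588111582101231707763671875)*w^19.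
Definition QF10 (w:R) := (-9901715191028602120111916291861240234375000000)*w^0 + (-23108785352198694945984866867965365600585937500)*w^1 + (146396849413951955446889921971047133483886718750)*w^2 + (219054039530686797119530337027490385437011718750)*w^3 + (-793955096255227792591408794755322531280517578125)*w^4 + (-741000565178181680403233621251179133758544921875)*w^5 + (2076366475618681080024849285059214177246093750000)*w^6 + (741261546489650365418080272637276724853515625000)*w^7 + (-2124842722228631584505059881752099189300537109375)*w^8 + (144449500531613211715295805892835381927490234375)*w^9 + (121786823290407679644969376292297005920410156250)*w^10 + (79848850495488270619008127135032869567871093750)*w^11 + (67178661931778532869048452622048250274658203125)*w^12 + (35495950686150134762103665601532247772216796875)*w^13 + (30052410492751594659428035423316270141601562500)*w^14 + (11076767465193594040331515160991626586914062500)*w^15 + (9511182079558523361421001533218074798583984375)*w^16 + (1784612544612085176359504052596249542236328125)*w^17 + (1562833833344309465431813697101463012695312500)*w^18.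
Lemma stepZ10 : forall w, (1600) * (805214383330095009369880969748800000000000000) + (1) * ZF w * AF11 w = (1600) * AF10 w + gf w * QF10 w.
Proof. intros; unfold ZF, gf, QF10, AF11, AF10; ring. Qed.
Definition AF9 (w:R) := (-6140694674161410761875678088052179808000000000000)*w^0 + (-11196963793561930095733046554553947289645507812500)*w^1 + (81336685151173969346964016990732602225363281250000)*w^2 + (137686907865281914406565443266122906065293945312500)*w^3 + (-419023438166809417884056263567364816131523437500000)*w^4 + (-647955473178927793663289705671409286466652343750000)*w^5 + (1024983313400295308789668311749236881264867187500000)*w^6 + (1414102808980459463716116969509238078702621093750000)*w^7 + (-1103492068469056435852183181661865387914679687500000)*w^8 + (-1290572681538720098622232740675387036342779296875000)*w^9 + (259343338228184847279719061266285215521281250000000)*w^10 + (192110004751820812437431753712379151502169921875000)*w^11 + (134623340509896827222092866933828613239304687500000)*w^12 + (91785414564750383314451758013907126233285156250000)*w^13 + (56236038722266068628807081372434006340007812500000)*w^14 + (34261845557683500118214083999879777094308593750000)*w^15 + (16562099446949146847123684070705989386898437500000)*w^16 + (8699047680507390260583730765987213592041992187500)*w^17 + (2535496508043698680674710870807410212480468750000)*w^18 + (1099683848161319119454837694656879629356445312500)*w^19.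
Definition QF9 (w:R) := (3349085350451878750022053035137661482421875000000)*w^0 + (5299363853669997273081943452044445397229003906250)*w^1 + (-50337977895229159164497600977468275056176757812500)*w^2 + (-52435938560195572012964326734515794738568115234375)*w^3 + (283343727423259108066448767371006224767071533203125)*w^4 + (168245893206133656124742566401560591680938720703125)*w^5 + (-727846676061367860737184882644836797979632568359375)*w^6 + (-141528756767967903113371220645971823045745849609375)*w^7 + (712979769429839713337740838570476449436358642578125)*w^8 + (-58610627977834985876168710941729224702435302734375)*w^9 + (-47650713124032989654731477673507818051849365234375)*w^10 + (-32034005799599409056009725926104049301885986328125)*w^11 + (-25488802722033623143727483006370199859967041015625)*w^12 + (-14082197432699634844715253746801807178131103515625)*w^13 + (-11010084884077646800763670575634754814044189453125)*w^14 + (-4348874619470627697577164958834125066925048828125)*w^15 + (-3359640814135165732392023962357781487213134765625)*w^16 + (-694168272087094816602496668313270505804443359375)*w^17 + (-532943968352650690848879012716733256109619140625)*w^18.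
Lemma stepZ9 : forall w, (1600) * (8091804003905867976154901735852032000000000000) + (1) * ZF w * AF10 w = (1600) * AF9 w + gf w * QF9 w.
Proof. intros; unfold ZF, gf, QF9, AF10, AF9; ring. Qed.
Definition AF8 (w:R) := (-57421838940123346943670454068815411169280000000000)*w^0 + (-569065264939856137470733518522737701527908437500000)*w^1 + (-316461370250153781066265345210976638235369062500000)*w^2 + (5614890689244159066395201572620843344498137500000000)*w^3 + (6598745353242724295865897272962668788823296250000000)*w^4 + (-19283316300070403911290084094019828629803877500000000)*w^5 + (-26714584970882222028041333248089452296279155000000000)*w^6 + (23792681701885072481924718336451751753035976250000000)*w^7 + (38112239077285506956500149128339518846233116250000000)*w^8 + (166326071081365256332349926308662919221833125000000)*w^9 + (-9385931199964793537817198330950342687610830625000000)*w^10 + (-6510849402209422838721807783637294070025858750000000)*w^11 + (-4342612382235703005112557417204574252741361250000000)*w^12 + (-2675426081730626989028575454789686826200500000000000)*w^13 + (-1574485202617282367873943335321199582511417500000000)*w^14 + (-804935282794387190699057169521896172693441250000000)*w^15 + (-391612437529946935232102947198261801384211250000000)*w^16 + (-144854634171626459467433607570627730585587187500000)*w^17 + (-49273338937553164535076256899324400900787812500000)*w^18 + (-8803959234468089230606342093516242718773750000000)*w^19.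
Definition QF8 (w:R) := (-256848248639652965822916719575223131902687500000000)*w^0 + (-475915062768152097461264105524158187963423828125000)*w^1 + (3477094102568611011788973491138171051980007812500000)*w^2 + (4375848622498888256063515313275603824644405273437500)*w^3 + (-18387845984028520934328576009364530632038362304687500)*w^4 + (-12843377138177435366456214838881398950961657226562500)*w^5 + (44251412308324541525627939121787308937268223632812500)*w^6 + (10243100570790156573060926999987344625776561523437500)*w^7 + (-40321403949452962197349702659496999601988799804687500)*w^8 + (2835057056083453600320591154643826392896174804687500)*w^9 + (2339698186620496111434766524607920375015325195312500)*w^10 + (1581954642591018395069569756339508310677364257812500)*w^11 + (1287232074750074082874592519721829341692170898437500)*w^12 + (710921711738229909541116151603060459401583007812500)*w^13 + (574061676860539894074231696880786700864194335937500)*w^14 + (224414543037999876482218453848331668537793945312500)*w^15 + (181139197907336019446381193932063704151616210937500)*w^16 + (36567574120501609914026900366750566485635742187500)*w^17 + (29691463900355616225280617755735749992624023437500)*w^18.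
Lemma stepZ8 : forall w, (1600) * (-262076670696960781271382283372767764480000000000) + (1) * ZF w * AF9 w = (1600) * AF8 w + gf w * QF8 w.
Proof. intros; unfold ZF, gf, QF8, AF9, AF8; ring. Qed.
Definition AF7 (w:R) := (41627512818604292612667872364745117186076672000000000)*w^0 + (29381926926004598427252602677777016400830704425000000)*w^1 + (-669709809389884170581855839871362167168916794450000000)*w^2 + (-555785312905105552433992129502408188455823584075000000)*w^3 + (4011024961854607712197839694192938303813216672000000000)*w^4 + (3515703971854312849810737196278648269749447744500000000)*w^5 + (-11017537352311275694856179208866200831684945469800000000)*w^6 + (-9766360430132469020360694052372607089375569833100000000)*w^7 + (12990158551060026568847134893011430942296718492000000000)*w^8 + (11254884686594908568230336921993747450800756858750000000)*w^9 + (-3183790255536885583400297986823747962977536862300000000)*w^10 + (-2314438131974844997289551376465743765159137055050000000)*w^11 + (-1597580241915442838730619588935775523827498670400000000)*w^12 + (-1061641511353802070632862684058880577888554442300000000)*w^13 + (-642390605432569861925199675489804400634162982600000000)*w^14 + (-376927300237089437214408562235856109636457569500000000)*w^15 + (-181662567056123508346470177218318780430269268000000000)*w^16 + (-89863104614277754239808847793329872919012615775000000)*w^17 + (-26692953163184177623721491001460812695199292450000000)*w^18 + (-10447223597876949402995562897365548690489039875000000)*w^19.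
Definition QF7 (w:R) := (-1994775698482099428520876385258072658761100000000000)*w^0 + (-24740364567153735884662724881940730754404954375000000)*w^1 + (-11716445887508040291848892781425378476483420625000000)*w^2 + (224695663542900726653305112109089598106278150937500000)*w^3 + (169119238765803391201328404189111461382059813750000000)*w^4 + (-781479779252058053481315980944585633973240089687500000)*w^5 + (-359703222904681003430090742348651443032847750625000000)*w^6 + (924593659237075608215321261350757174894440122187500000)*w^7 + (207082371408826549655803714500876673192683277500000000)*w^8 + (-113668408439990399206665371588866517805105934687500000)*w^9 + (-80058621416877702321515728495630109307026578125000000)*w^10 + (-58946067438276769877406601182837974103933972187500000)*w^11 + (-36337512771021816387005416533218302354113896250000000)*w^12 + (-24478211717218828726838794789995551890754129062500000)*w^13 + (-12340435357528702354118368355597791877712099375000000)*w^14 + (-7130546787768491579627017894954465440063840937500000)*w^15 + (-2640619559665298240254410112009833468625935000000000)*w^16 + (-1075065333514360854759475015569787785476832187500000)*w^17 + (-237706899330638409226371236524938553406891250000000)*w^18.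
Lemma stepZ7 : forall w, (1600) * (483089080872113925346827615868453187944448000000000) + (1) * ZF w * AF8 w = (1600) * AF7 w + gf w * QF7 w.
Proof. intros; unfold ZF, gf, QF7, AF8, AF7; ring. Qed.
Definition AF6 (w:R) := (5727420090868464404500829693817621883174064619520000000)*w^0 + (6641087669678991000613275668406291858469639961316000000)*w^1 + (-83213238907090392871601811068319949614803899571808000000)*w^2 + (-97519685604129774109156816867245475117074485931828000000)*w^3 + (466472031930409673992195221439886111739406111881696000000)*w^4 + (530854069063637934518468145403055522633322207315696000000)*w^5 + (-1227588917369844286401038807224179056787343866030624000000)*w^6 + (-1322857185008650225367072126367447886015126090708272000000)*w^7 + (1411689602034812349212130498552204054528957759780960000000)*w^8 + (1389080293166610832668257254238107190121001256413848000000)*w^9 + (-346812339525084782613476902119956228955188017298784000000)*w^10 + (-253643073391665100467582693632696717665681673014776000000)*w^11 + (-175776674181709150700007450573876218205734784202848000000)*w^12 + (-117859131982094741314142054269012666356927118998672000000)*w^13 + (-71508384721967984746218534235272610053940801146720000000)*w^14 + (-42558004907074494325435100395817553544684866450096000000)*w^15 + (-20483326208309387198683851690020808623207615791584000000)*w^16 + (-10379654757445428110908521832177492225595674758108000000)*w^17 + (-3050408976963928738399098347122177959514431054528000000)*w^18 + (-1246753290769122677657884577769756608175023374068000000)*w^19.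
Definition QF6 (w:R) := (1792567878127096274315700581373543298734353899200000000)*w^0 + (1154100049151415849895000754442870350124339382650000000)*w^1 + (-28372729456279715607860470571728378324391664438900000000)*w^2 + (-13793446981658958481728144011029389601051019094975000000)*w^3 + (164144979516838974101974318552100908114803018418125000000)*w^4 + (36795474651048501879111269910050124032695365231525000000)*w^5 + (-404445472669515556226465627967661668412439301594975000000)*w^6 + (-8192938247648040981455597179927437726136779764775000000)*w^7 + (371502321589717990476488942941391862687485770862325000000)*w^8 + (-35853248855404182470971261631514701489865200327175000000)*w^9 + (-28352973517458152022439067891818221265895204543175000000)*w^10 + (-19505825740220895957152510619892873221538886969925000000)*w^11 + (-14830870034969506302271269953259814901777071440225000000)*w^12 + (-8537337869576072944453443306809542488772491622425000000)*w^13 + (-6228886910818357245203666832705006058933584424725000000)*w^14 + (-2626106487536399791716623447752974004685652391125000000)*w^15 + (-1840258207614943302640835783530122877081363862625000000)*w^16 + (-417740251067541263153608933015841030746198739775000000)*w^17 + (-282075037142677633880880198228869814643204076625000000)*w^18.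
Lemma stepZ6 : forall w, (1600) * (76133654804831682593043073614469922630706135040000000) + (1) * ZF w * AF7 w = (1600) * AF6 w + gf w * QF6 w.
Proof. intros; unfold ZF, gf, QF6, AF7, AF6; ring. Qed.
Definition AF5 (w:R) := (311501979816905360107236438918244469542609633379614720000)*w^0 + (340463841701901927898056862590335968747352391434664960000)*w^1 + (-4366433380145292133380330466562435746694170524031415040000)*w^2 + (-4914404936315528221489460645833564794435202052533512960000)*w^3 + (23844456841286636344790139481346802583140489720074234880000)*w^4 + (26468112571764608352760329438455724129409636113903098880000)*w^5 + (-61589395360320601753898193905794448785711913333238927360000)*w^6 + (-65487882823391397378312132676495920863047738650352619520000)*w^7 + (69901778579904083134002739597326563219034176261952138240000)*w^8 + (68392646376911457660324271796474769623098282024664970240000)*w^9 + (-16987050370826166213233531173762179113870379420838755840000)*w^10 + (-12429955868328798590152158375989337647041163197757468160000)*w^11 + (-8619633671169686427876454909599608135984806881127603200000)*w^12 + (-5782309389290869033159801720004569326632958543479024640000)*w^13 + (-3511243353518456322619442327572187494340592044258150400000)*w^14 + (-2090246308266049937871002031326915089608179511233710080000)*w^15 + (-1007225808873087811196582811362113543408562522010270720000)*w^16 + (-510226693895021233730584528240400112905670501938503680000)*w^17 + (-150217290097491068232882645400473801992012960236680960000)*w^18 + (-61298014626576908191854619015475162376989555629674240000)*w^19.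
Definition QF5 (w:R) := (242038019393299640076024893538358440761659318714112000000)*w^0 + (275739880220531656528491542977077177035538811354728000000)*w^1 + (-3540133940997315611663664117269847946614296681715648000000)*w^2 + (-2784545085653036521436201765084695195468319183438988000000)*w^3 + (19519601865288870566108256071316867257900548646193804000000)*w^4 + (8334347694824550257593044745041425753165346501935700000000)*w^5 + (-48026401804464856147709175714636610935570575643239412000000)*w^6 + (-5693218097058629356149692091727166189049755069326860000000)*w^7 + (44854381887066523524339010027974325177081879647326604000000)*w^8 + (-3865447156389526257815355751306939477081245934583484000000)*w^9 + (-3107492785658742302913975118877806667225053398375252000000)*w^10 + (-2116112369285454029050811022830794674042902547420804000000)*w^11 + (-1652482157649389265431269655969944805020720329162876000000)*w^12 + (-932289700825977942196434831536365062884912417965668000000)*w^13 + (-708364906038841306623670256764467888428222903409468000000)*w^14 + (-288661466312506290500318325604990664635690474549476000000)*w^15 + (-214230377352916833778798159802104748212315138620828000000)*w^16 + (-46205196945721518284697002616975863269813960624284000000)*w^17 + (-33662338850766312296762883599783428420725631099836000000)*w^18.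
Lemma stepZ5 : forall w, (1600) * (4656778296665388277933286028092539858012767959121920000) + (1) * ZF w * AF6 w = (1600) * AF5 w + gf w * QF5 w.
Proof. intros; unfold ZF, gf, QF5, AF6, AF5; ring. Qed.
Definition AF4 (w:R) := (12294490448822021077759535055769767776647550809886477516800)*w^0 + (11525408917170583467539446203550081755894623696163216384000)*w^1 + (-169093874024743175862453910645518362350306163075109829017600)*w^2 + (-165307350614445354420853476892341240905457207206252247244800)*w^3 + (907338087649140402552525902472205197597514441686774123724800)*w^4 + (894461976793216911986491376618574918653957670965832663859200)*w^5 + (-2308079331837834137176460055587684714640529408834912636108800)*w^6 + (-2237311927674531768166133747311314579294709029035030089728000)*w^7 + (2581341746854610906905747869852771133898655475344293766758400)*w^8 + (2374327223574704335922205549405650421422949444293651431833600)*w^9 + (-611571861846319785000199029547495041970165335057478080921600)*w^10 + (-446865274296692227458736866209441763828416009735202244608000)*w^11 + (-309883981823858346913732482128639784084463196971838462361600)*w^12 + (-207313682569899794479053668899486136336847307442371207987200)*w^13 + (-126025275253411322560984470268502026936743801672761435750400)*w^14 + (-74622158814739244948860046643265164745638902210388312883200)*w^15 + (-36086616155067344881507197709945177183258804615327157452800)*w^16 + (-18089178061051319933783745874423354964233946909112345600000)*w^17 + (-5372024120730233510745813176960877272979042476109884620800)*w^18 + (-2147762385975449388486835760825828071629577159683458457600)*w^19.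
Definition QF4 (w:R) := (13119601328160301234607379013816630498743247708880240640000)*w^0 + (14199323045043510828895770803680087882039789451102853120000)*w^1 + (-185967989349234434821584617498745765018588513138257026560000)*w^2 + (-134659616394318493871657804066821862329996457132250032640000)*w^3 + (990665870729495395211234706249521089117761279226357774080000)*w^4 + (397308447656800614858856321793551349431742260069014336000000)*w^5 + (-2386651111713868432814219690626600148373457982098594018560000)*w^6 + (-268678213890678704177493494519794788760359372461143441920000)*w^7 + (2206558737489779225329873226039517059416186953027018796800000)*w^8 + (-189239820077748047518842938351406262950243882587086579200000)*w^9 + (-152163420650282994553155012712249600812832875030963421440000)*w^10 + (-103741651377387736083976047951396669437304574461229800960000)*w^11 + (-81000559123724232145850533937036914200990155603805991680000)*w^12 + (-45783280391752446013016253876907960582975366958837107200000)*w^13 + (-34759677566183507177944420929918277391717985283767801600000)*w^14 + (-14203396390516133032165471126120355118760463339752404480000)*w^15 + (-10523183585616716679425568688155615713470539706809987840000)*w^16 + (-2278224408461528504724047474364012944851652813129832960000)*w^17 + (-1655046394917576521180074713417829384178718002001204480000)*w^18.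
Lemma stepZ4 : forall w, (1600) * (144475786697302680271016689740018636544036558347226316800) + (1) * ZF w * AF5 w = (1600) * AF4 w + gf w * QF4 w.
Proof. intros; unfold ZF, gf, QF4, AF5, AF4; ring. Qed.
Definition AF3 (w:R) := (330243761567011808328595382797000926732621934376669012819968)*w^0 + (301127934379423417800076973268702609873300138304237934149632)*w^1 + (-4540829951739526800283933909658169863001942218758188267208704)*w^2 + (-4233643804399978449021233333909521122018013934597212129198080)*w^3 + (24303964347946188330515966019437372935923986113649129624961024)*w^4 + (22777440243960541355582726010369122724148478198430596989452288)*w^5 + (-61615564951314047229128476526242512225191405246489734560350208)*w^6 + (-57101476597679164404957504476461053842640435561148525995884544)*w^7 + (68589455015393289840797877736303955472800520400211946838425600)*w^8 + (61067035835784616559197173578614961518300379477373394853167104)*w^9 + (-16058102884186504585720769574124707294717930557889868788400128)*w^10 + (-11722649622707036296448268762349365661834442768838346707566592)*w^11 + (-8128784598792914421879073276727277102459046695322737678483456)*w^12 + (-5429317385834335524927430318607491059573632014041190257131520)*w^13 + (-3302295242284300207312775761224221156160053987080080801398784)*w^14 + (-1949403710959313613894683339928107991728514392211014598524928)*w^15 + (-944522557708186185348360787360860508236251982080096396378112)*w^16 + (-470736387403108289309732427988731841864702653398904929058816)*w^17 + (-140447952041094909942752215081126770000606567618560179568640)*w^18 + (-55537675246903462750244392932345872857044210361649270882304)*w^19.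
Definition QF3 (w:R) := (516329406044243202850771180948235714693113901159421640704000)*w^0 + (483656913998500203750544257121603224312065042106039755980800)*w^1 + (-7211975806294917972108985593131732824239425858174562248294400)*w^2 + (-4074858469590453225977388173804279925390814951207893591859200)*w^3 + (37148090016870995967259802882543317548104414512385745879244800)*w^4 + (10813142041538599409799372875778770284432342438421412174028800)*w^5 + (-86127936655044662399348290131321735421098286004548137579110400)*w^6 + (-5385943131073154978595341564866262047753332820267961599795200)*w^7 + (77078889256213139404386922829695532918303973076309335158169600)*w^8 + (-6837058283689646293552657655723467608376791975808036183449600)*w^9 + (-5458247118829299316322905709148684179201904693997815165542400)*w^10 + (-3750563910267937804823736251992375755290753333294695362355200)*w^11 + (-2892841984953483593648608754085513911504772710229045779865600)*w^12 + (-1657159413555637943406794803598458622034577008154825079808000)*w^13 + (-1234431798969665990535729546771375951814929641654225254195200)*w^14 + (-514948391595167645883250087170092802514925563810862427955200)*w^15 + (-371278831094766955393295600172430048407256723613148929433600)*w^16 + (-82759542066428272524018718713994672293176409224146589491200)*w^17 + (-57989584421337133489144565542297357933998583311453378355200)*w^18.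
Lemma stepZ3 : forall w, (1600) * (2305862812061518538327375046497265994061106944720616030208) + (1) * ZF w * AF4 w = (1600) * AF3 w + gf w * QF3 w.
Proof. intros; unfold ZF, gf, QF3, AF4, AF3; ring. Qed.
Definition AF2 (w:R) := (3605541459069431794765592092438440097254939730200160548945920)*w^0 + (3442190756702385204023697358870070638152836545193408008617984)*w^1 + (-49824775680981827003198246909348277982592959843780745154920448)*w^2 + (-47609250308948713701527521959416126111746381817520944861085696)*w^3 + (267558045114016573283076301520538675403715563846241162593566720)*w^4 + (253828650700012420448889503393983148415701938456132240693002240)*w^5 + (-679914042887611332189300177809829274586758788047360238171979776)*w^6 + (-633323803053882240049495828578695735442248475249088066918023168)*w^7 + (758113903247398368768296222726673507125957995269720725765750784)*w^8 + (675865598407060060049194129844423988902007851697386396738519040)*w^9 + (-177640865339649702405722215900117650246083515901940694792273920)*w^10 + (-129671643451957675393182968494979825180070671073330162750849024)*w^11 + (-89917236590597599646889218138002807914682658665815037225992192)*w^12 + (-60053027111506015366876335582034741041535193779749782544973824)*w^13 + (-36527023124123397465294046363682514040060160760547899282554880)*w^14 + (-21562030542265623740806492229334692931469936430133164762726400)*w^15 + (-10447423171708400158187596203435245111007637668262072238997504)*w^16 + (-5207383491330976227898585668222895546053395360491589296914432)*w^17 + (-1553567584728759832422016343550232781203486001395985051418624)*w^18 + (-614597929396683222655102271980665148046587462357513384427520)*w^19.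
Definition QF2 (w:R) := (13818234360693688060955258513184962244319388262510885922144256)*w^0 + (12749457178234372504859249872940844017067275861777880167350272)*w^1 + (-193914006353319175871437177380116565946861347857823805857595392)*w^2 + (-100185642945784460890742352682226679313330237110014633410756608)*w^3 + (991878040144272863872197935041326918416554985433621776468606976)*w^4 + (242156217976040846693855084580955082971740333431722881519452160)*w^5 + (-2263469569192830134924100638646342878363494738799969319514669056)*w^6 + (-82702489856997206320115252368653057313708343161416417395146752)*w^7 + (1989617765766459465128260411543759106670695526658945650596708352)*w^8 + (-179902286998448529663417112659281124651654915241562067452166144)*w^9 + (-143014176055290786366723781988965623245088940092386651729559552)*w^10 + (-98701381830627336186870706753126366269473585630788184813666304)*w^11 + (-75599340510842789315573435000187084941701253077395045151997952)*w^12 + (-43626487533553483154571159505862135131707384100830117518376960)*w^13 + (-32155936776239423226554338096925721087087730438737514859200512)*w^14 + (-13564264389882677539722789622189219366410029699424253685465088)*w^15 + (-9636570005136433752527360391125309111756176967341874752978944)*w^16 + (-2181502122949362148697222412152392477162095225213295992766464)*w^17 + (-1499517231666393494256598609173338567140193679764530313822208)*w^18.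
Lemma stepZ2 : forall w, (1600) * (14131109130840787698067340120866948829204788093469111353344) + (1) * ZF w * AF3 w = (1600) * AF2 w + gf w * QF2 w.
Proof. intros; unfold ZF, gf, QF2, AF3, AF2; ring. Qed.
Definition AF1 (w:R) := (-1791928717881101184886953284986174763008000000000000000000000)*w^0 + (-1707563259924260120722788024604124377525725000000000000000000)*w^1 + (24757232422899622591735209112412604365377500000000000000000000)*w^2 + (23633584613057621449076235127865119691813925000000000000000000)*w^3 + (-132926979074621047030150106165594655664381200000000000000000000)*w^4 + (-126049841998912915502007333751064657609728500000000000000000000)*w^5 + (337756734884012559027153025699006343453930400000000000000000000)*w^6 + (314564291160327123787364314711670436935038500000000000000000000)*w^7 + (-376573902618191608606526782784301383307565200000000000000000000)*w^8 + (-335717425913570892759998869762761634665766950000000000000000000)*w^9 + (88231752671658663780349997477110586159067000000000000000000000)*w^10 + (64406805487356437760411605915562992033917350000000000000000000)*w^11 + (44661426152224785759029210031096080063058000000000000000000000)*w^12 + (29828349577667537490619495209727578836756700000000000000000000)*w^13 + (18143049065198920902009606927370046806411200000000000000000000)*w^14 + (10710015073763734429401663714077521206880500000000000000000000)*w^15 + (5189314875206265840117262295753866929099600000000000000000000)*w^16 + (2586567487878337936682337526695144707854875000000000000000000)*w^17 + (771674652458401757990211273202895014778700000000000000000000)*w^18 + (305278000496614108098525772077683891255325000000000000000000)*w^19.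
Definition QF1 (w:R) := (150464833611823252867203997013494868227157076356732872598487040)*w^0 + (146489222305623551275963943948016474399970157924588262969704448)*w^1 + (-2129137283717953431102633226499332675710572968975912102079496192)*w^2 + (-1150459126067356974251925523090099793404097607527367591191052288)*w^3 + (10956112377242663243166357385280640972543512508550479965508403200)*w^4 + (2756063168065693495454335162952489523148908756750014142098767872)*w^5 + (-25059177584194978669382866650833702541511770271429574329622003712)*w^6 + (-941761455259894770458103231118089222439428874629217947881766912)*w^7 + (22018634349806466153961520715095649029487616320997661466140147712)*w^8 + (-1990381935680376628853014348564060283247955742731758713348751360)*w^9 + (-1581924877336041133378209396012573332145293549954881103777169408)*w^10 + (-1091890236850301267652527454923710226912099212283170772368293888)*w^11 + (-836176082515374451244618071606663173261274239801055633172398080)*w^12 + (-482562475235594998616585373450032573785320941895103437510868992)*w^13 + (-355678178960800813311549223062849292967529400196920467379519488)*w^14 + (-150016417948161483379994240642475415051970550166037395463012352)*w^15 + (-106608657037942621020815179974713401753379155015224585445244928)*w^16 + (-24122984835172702018396475388416995799143085629323708239904768)*w^17 + (-16594144093710447011687761343477958997257861483652861379543040)*w^18.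
Lemma stepZ1 : forall w, (1600) * (-27802797644590317388762803455393575731200000000000000000000) + (1) * ZF w * AF2 w = (1600) * AF1 w + gf w * QF1 w.
Proof. intros; unfold ZF, gf, QF1, AF2, AF1; ring. Qed.
Definition QF0 (w:R) := (-74788620400711637709374838372792125997496000000000000000000000)*w^0 + (-72653073611713655204334968757883409211288450000000000000000000)*w^1 + (1057908227838330226721610806577154904173061400000000000000000000)*w^2 + (570636045453256720301976201398546182173065175000000000000000000)*w^3 + (-5442420251615604396469572117738219283531613475000000000000000000)*w^4 + (-1367676567884174667758261099542670246654785425000000000000000000)*w^5 + (12446989904339024346823199959025985799832120325000000000000000000)*w^6 + (467669258932737227499387118835595541479824775000000000000000000)*w^7 + (-10937001629852578285383497872090137188780355075000000000000000000)*w^8 + (988579360153690413996819183974174232069844275000000000000000000)*w^9 + (785726029350475971697931811902526505998473325000000000000000000)*w^10 + (542328488217919941397415274273881688552001725000000000000000000)*w^11 + (415328798868863213167223847655488886364615775000000000000000000)*w^12 + (239687037199367540176758031660211869628045925000000000000000000)*w^13 + (176668097494195504279756689125466897854483175000000000000000000)*w^14 + (74513777552398268911090385305041290418836325000000000000000000)*w^15 + (52953761260360527254480450195283261726095175000000000000000000)*w^16 + (11982153601975038330878456986225332552620475000000000000000000)*w^17 + (8242506013408580918660195846097465063893775000000000000000000)*w^18.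
Lemma stepZ0 : forall w, (1600) * (9774552621457470122500000000000000000000000000000000000000) + (1) * ZF w * AF1 w = (1600) * 0 + gf w * QF0 w.
Proof. intros; unfold ZF, gf, QF0, AF1; ring. Qed.
Lemma Pf_horner2 : forall K, Pf K = (9774552621457470122500000000000000000000000000000000000000) + K * ((-27802797644590317388762803455393575731200000000000000000000) + K * ((14131109130840787698067340120866948829204788093469111353344) + K * ((2305862812061518538327375046497265994061106944720616030208) + K * ((144475786697302680271016689740018636544036558347226316800) + K * ((4656778296665388277933286028092539858012767959121920000) + K * ((76133654804831682593043073614469922630706135040000000) + K * ((483089080872113925346827615868453187944448000000000) + K * ((-262076670696960781271382283372767764480000000000) + K * ((8091804003905867976154901735852032000000000000) + K * ((805214383330095009369880969748800000000000000) + K * ((-5130242398470886015317438950000000000000000) + K * ((44602844570033253018161875000000000000000) + K * ((-546554928845186341347265625000000000000) + K * ((13463175828870323610839843750000000000) + K * ((-223881811253170562744140625000000000) + K * ((2406402165103435516357421875000000) + K * ((-18656729921698570251464843750000) + K * ((100074581801891326904296875000) + K * ((-347825698554515838623046875) + K * (((582076609134674072265625)/1))))))))))))))))))))).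
Proof. intros; unfold Pf; field. Qed.
Lemma Pz_zero : forall w, gf w = 0 -> Pf (ZF w / dZ) = 0.
Proof. intros w Hg. set (K := ZF w / dZ). rewrite Pf_horner2.
assert (E19 : (-347825698554515838623046875) + K * ((582076609134674072265625)/1) = (AF19 w / 64)).
{ pose proof (stepZ19 w) as S. rewrite Hg in S. unfold K. apply (step_lemma (1600) (1) (25) (64) (1) dZ); try unfold dZ; lra. }
rewrite E19.
assert (E18 : (100074581801891326904296875000) + K * (AF19 w / 64) = (AF18 w / 64)).
{ pose proof (stepZ18 w) as S. rewrite Hg in S. unfold K. apply (step_lemma (102400) (1) (1600) (64) (64) dZ); try unfold dZ; lra. }
rewrite E18.
assert (E17 : (-18656729921698570251464843750000) + K * (AF18 w / 64) = (AF17 w / 32)).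
{ pose proof (stepZ17 w) as S. rewrite Hg in S. unfold K. apply (step_lemma (102400) (1) (3200) (32) (64) dZ); try unfold dZ; lra. }
rewrite E17.
assert (E16 : (2406402165103435516357421875000000) + K * (AF17 w / 32) = (AF16 w / 16)).
{ pose proof (stepZ16 w) as S. rewrite Hg in S. unfold K. apply (step_lemma (51200) (1) (3200) (16) (32) dZ); try unfold dZ; lra. }
rewrite E16.
assert (E15 : (-223881811253170562744140625000000000) + K * (AF16 w / 16) = (AF15 w / 4)).
{ pose proof (stepZ15 w) as S. rewrite Hg in S. unfold K. apply (step_lemma (25600) (1) (6400) (4) (16) dZ); try unfold dZ; lra. }
rewrite E15.
assert (E14 : (13463175828870323610839843750000000000) + K * (AF15 w / 4) = (AF14 w / 4)).
{ pose proof (stepZ14 w) as S. rewrite Hg in S. unfold K. apply (step_lemma (6400) (1) (1600) (4) (4) dZ); try unfold dZ; lra. }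
rewrite E14.
assert (E13 : (-546554928845186341347265625000000000000) + K * (AF14 w / 4) = (AF13 w / 2)).
{ pose proof (stepZ13 w) as S. rewrite Hg in S. unfold K. apply (step_lemma (6400) (1) (3200) (2) (4) dZ); try unfold dZ; lra. }
rewrite E13.
assert (E12 : (44602844570033253018161875000000000000000) + K * (AF13 w / 2) = (AF12 w / 1)).
{ pose proof (stepZ12 w) as S. rewrite Hg in S. unfold K. apply (step_lemma (3200) (1) (3200) (1) (2) dZ); try unfold dZ; lra. }
rewrite E12.
assert (E11 : (-5130242398470886015317438950000000000000000) + K * (AF12 w / 1) = (AF11 w / 1)).
{ pose proof (stepZ11 w) as S. rewrite Hg in S. unfold K. apply (step_lemma (1600) (1) (1600) (1) (1) dZ); try unfold dZ; lra. }
rewrite E11.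
assert (E10 : (805214383330095009369880969748800000000000000) + K * (AF11 w / 1) = (AF10 w / 1)).
{ pose proof (stepZ10 w) as S. rewrite Hg in S. unfold K. apply (step_lemma (1600) (1) (1600) (1) (1) dZ); try unfold dZ; lra. }
rewrite E10.
assert (E9 : (8091804003905867976154901735852032000000000000) + K * (AF10 w / 1) = (AF9 w / 1)).
{ pose proof (stepZ9 w) as S. rewrite Hg in S. unfold K. apply (step_lemma (1600) (1) (1600) (1) (1) dZ); try unfold dZ; lra. }
rewrite E9.
assert (E8 : (-262076670696960781271382283372767764480000000000) + K * (AF9 w / 1) = (AF8 w / 1)).
{ pose proof (stepZ8 w) as S. rewrite Hg in S. unfold K. apply (step_lemma (1600) (1) (1600) (1) (1) dZ); try unfold dZ; lra. }
rewrite E8.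
assert (E7 : (483089080872113925346827615868453187944448000000000) + K * (AF8 w / 1) = (AF7 w / 1)).
{ pose proof (stepZ7 w) as S. rewrite Hg in S. unfold K. apply (step_lemma (1600) (1) (1600) (1) (1) dZ); try unfold dZ; lra. }
rewrite E7.
assert (E6 : (76133654804831682593043073614469922630706135040000000) + K * (AF7 w / 1) = (AF6 w / 1)).
{ pose proof (stepZ6 w) as S. rewrite Hg in S. unfold K. apply (step_lemma (1600) (1) (1600) (1) (1) dZ); try unfold dZ; lra. }
rewrite E6.
assert (E5 : (4656778296665388277933286028092539858012767959121920000) + K * (AF6 w / 1) = (AF5 w / 1)).
{ pose proof (stepZ5 w) as S. rewrite Hg in S. unfold K. apply (step_lemma (1600) (1) (1600) (1) (1) dZ); try unfold dZ; lra. }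
rewrite E5.
assert (E4 : (144475786697302680271016689740018636544036558347226316800) + K * (AF5 w / 1) = (AF4 w / 1)).
{ pose proof (stepZ4 w) as S. rewrite Hg in S. unfold K. apply (step_lemma (1600) (1) (1600) (1) (1) dZ); try unfold dZ; lra. }
rewrite E4.
assert (E3 : (2305862812061518538327375046497265994061106944720616030208) + K * (AF4 w / 1) = (AF3 w / 1)).
{ pose proof (stepZ3 w) as S. rewrite Hg in S. unfold K. apply (step_lemma (1600) (1) (1600) (1) (1) dZ); try unfold dZ; lra. }
rewrite E3.
assert (E2 : (14131109130840787698067340120866948829204788093469111353344) + K * (AF3 w / 1) = (AF2 w / 1)).
{ pose proof (stepZ2 w) as S. rewrite Hg in S. unfold K. apply (step_lemma (1600) (1) (1600) (1) (1) dZ); try unfold dZ; lra. }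
rewrite E2.
assert (E1 : (-27802797644590317388762803455393575731200000000000000000000) + K * (AF2 w / 1) = (AF1 w / 1)).
{ pose proof (stepZ1 w) as S. rewrite Hg in S. unfold K. apply (step_lemma (1600) (1) (1600) (1) (1) dZ); try unfold dZ; lra. }
rewrite E1.
assert (E0 : (9774552621457470122500000000000000000000000000000000000000) + K * (AF1 w / 1) = (0/1)).
{ pose proof (stepZ0 w) as S. rewrite Hg in S. unfold K. apply (step_lemma (1600) (1) (1600) (1) (1) dZ); try unfold dZ; lra. }
rewrite E0.
field. Qed.
Lemma Mf_pos : forall Y, 2 < Y -> 0 < Mf Y.
Proof.
  intros Y HY. unfold Mf.
  assert (0 < Y) by lra. assert (0 < Y - 2) by lra.
  assert (0 < Y^8) by (apply pow_lt; lra).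
  assert (0 <= 8*(Y-2)*Y^6) by (apply Rmult_le_pos; [lra| apply pow_le; lra]).
  assert (0 <= 64*(Y-2)^2*Y^4) by (apply Rmult_le_pos; [apply Rmult_le_pos; [lra| apply pow_le; lra] | apply pow_le; lra]).
  assert (0 <= 512*(Y-2)^3*Y^2) by (apply Rmult_le_pos; [apply Rmult_le_pos; [lra| apply pow_le; lra] | apply pow_le; lra]).
  assert (0 <= 4096*(Y-2)^4) by (apply Rmult_le_pos; [lra| apply pow_le; lra]).
  lra.
Qed.

Lemma DEN_pos : forall v, 1 <= v -> 0 < DENf v.
Proof.
  intros v Hv. rewrite DENf_eq.
  assert (0 < 3*v^2-1) by nra. assert (0 < (v+1)^2) by (apply pow_lt; lra).
  assert (0 < Mf (3*v^2+1)) by (apply Mf_pos; nra).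
  apply Rmult_lt_0_compat; [apply Rmult_lt_0_compat; [lra|auto]|auto].
Qed.

Lemma NUM_pos : forall v, 1 <= v -> 0 < NUMf v.
Proof.
  intros v Hv. rewrite NUMf_eq. apply Rmult_lt_0_compat; [lra| apply pow_lt; nra].
Qed.

Lemma g_incr : forall x y, 1 <= x < y -> gf x < gf y.
Proof.
  intros x y H.
  replace x with (1 + (x-1)) by ring. replace y with (1 + (y-1)) by ring.
  rewrite !g_shift. unfold Lgs. apply pev_strict; [vm_compute; reflexivity| lra |].
  apply pev_pos_head; [vm_compute; reflexivity | vm_compute; reflexivity | lra].
Qed.

Lemma h_pos : forall v, 1 <= v -> 0 < hf v.
Proof.
  intros v Hv. replace v with (1 + (v-1)) by ring. rewrite h_shift. unfold Lhs.
  apply pev_pos_head; [vm_compute; reflexivity | vm_compute; reflexivity | lra].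
Qed.

Lemma phi_deriv : forall c, 1 <= c ->
  derivable_pt_lim (pev LNUM / pev LDEN)%F c (gf c * hf c / (pev LDEN c)²).
Proof.
  intros c Hc. pose proof (DEN_pos c Hc) as HD. rewrite DEN_pev in HD.
  pose proof (derivable_pt_lim_div _ _ c _ _ (pev_deriv LNUM c) (pev_deriv LDEN c) ltac:(lra)) as H.
  rewrite <- C_id. exact H.
Qed.

Lemma phi_mvt : forall a b, 1 <= a < b -> exists c, a < c < b /\
  NUMf b / DENf b - NUMf a / DENf a = gf c * hf c / (pev LDEN c)² * (b - a).
Proof.
  intros a b H.
  destruct (MVT_cor2 (pev LNUM / pev LDEN)%F (fun c => gf c * hf c / (pev LDEN c)²) a b ltac:(lra)
    (fun c Hc => phi_deriv c ltac:(lra))) as [c [E Hc]].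
  exists c. split; auto. rewrite !NUM_pev, !DEN_pev. exact E.
Qed.

Lemma phi_min : forall v w, 1 <= v -> 1 <= w -> gf w = 0 ->
  NUMf w / DENf w <= NUMf v / DENf v /\ (NUMf w / DENf w = NUMf v / DENf v -> v = w).
Proof.
  intros v w Hv Hw Hg.
  assert (key : forall a b, 1 <= a < b -> (gf b = 0 -> NUMf b / DENf b < NUMf a / DENf a)
                                        /\ (gf a = 0 -> NUMf a / DENf a < NUMf b / DENf b)).
  { intros a b Hab. destruct (phi_mvt a b Hab) as [c [Hc E]].
    pose proof (h_pos c ltac:(lra)) as Hh.
    pose proof (DEN_pos c ltac:(lra)) as HD. rewrite DEN_pev in HD.
    assert (HD2 : 0 < (pev LDEN c)²) by (unfold Rsqr; nra).
    split; intros Hg0.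
    - assert (gf c < 0) by (rewrite <- Hg0; apply g_incr; lra).
      assert (gf c * hf c / (pev LDEN c)² < 0).
      { unfold Rdiv. assert (0 < / (pev LDEN c)²) by (apply Rinv_0_lt_compat; lra).
        assert (gf c * hf c < 0) by nra. nra. }
      assert (gf c * hf c / (pev LDEN c)² * (b - a) < 0) by nra. lra.
    - assert (0 < gf c) by (rewrite <- Hg0; apply g_incr; lra).
      assert (0 < gf c * hf c / (pev LDEN c)²).
      { apply Rdiv_lt_0_compat; [nra|lra]. }
      assert (0 < gf c * hf c / (pev LDEN c)² * (b - a)) by nra. lra. }
  destruct (Rtotal_order v w) as [H|[H|H]].
  - destruct (key v w ltac:(lra)) as [A _]. specialize (A Hg). split; [lra| intros; lra].
  - subst. split; [lra| auto].
  - destruct (key w v ltac:(lra)) as [_ A]. specialize (A Hg). split; [lra| intros; lra].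
Qed.
Lemma tsum_pos_head : forall bs c e r, Forall (fun b => 0 <= b) bs ->
  forallb (fun ce => Z.leb 0 (fst ce)) r = true -> 0 < IZR c * mono bs e -> 0 < tsum bs ((c,e)::r).
Proof. intros. cbn [tsum]. pose proof (tsum_nonneg bs r H H0). lra. Qed.

Lemma gneg : forall w, 1 <= w <= 6/5 -> gf (-w) < 0.
Proof.
  intros w Hw. pose proof (gneg_bern w) as E.
  assert (Hb : Forall (fun b => 0 <= b) [5*w-5; 6-5*w]).
  { apply Forall_cons; [lra|]. apply Forall_cons; [lra|apply Forall_nil]. }
  assert (Hr : 0 <= tsum [5*w-5; 6-5*w] Lgr) by (apply tsum_nonneg; [auto| vm_compute; reflexivity]).
  assert (0 < tsum [5*w-5; 6-5*w] Lg).
  { unfold Lg. cbn [tsum mono].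
    assert (0 <= (5*w-5)^20) by (apply pow_le; lra).
    assert (0 <= (6-5*w)^20) by (apply pow_le; lra).
    destruct (Rle_lt_dec (6-5*w) 0) as [Hc|Hc].
    - assert (0 < (5*w-5)^20) by (apply pow_lt; lra). nra.
    - assert (0 < (6-5*w)^20) by (apply pow_lt; lra). nra. }
  lra.
Qed.

Lemma phi_lb : forall v, 1 <= v -> 29/100 < NUMf v / DENf v.
Proof.
  intros v Hv. pose proof (DEN_pos v Hv).
  pose proof (N_lb (v-1)) as E. replace (1 + (v-1)) with v in E by ring.
  assert (0 < tsum [v-1] LN).
  { unfold LN. apply tsum_pos_head.
    - apply Forall_cons; [lra|apply Forall_nil].
    - vm_compute; reflexivity.
    - cbn [mono]. lra. }
  assert (NUMf v / DENf v - 29/100 = (100*NUMf v - 29*DENf v)/(100*DENf v)) by (field; lra).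
  assert (0 < (100*NUMf v - 29*DENf v)/(100*DENf v)) by (apply Rdiv_lt_0_compat; lra).
  lra.
Qed.

Definition vof (t : R) : R := sqrt ((1+t)/(3*(1-t))).

Lemma vof_facts : forall t, 1/2 < t < 3/5 ->
  1 < vof t < 6/5 /\ (vof t)^2 = (1+t)/(3*(1-t)) /\ 3*(vof t)^2+1 = 2/(1-t) /\
  (3*(vof t)^2-1)/(3*(vof t)^2+1) = t.
Proof.
  intros t Ht.
  assert (Hpos : 0 < (1+t)/(3*(1-t))) by (apply Rdiv_lt_0_compat; lra).
  assert (Hsq : (vof t)^2 = (1+t)/(3*(1-t))).
  { unfold vof. rewrite <- Rsqr_pow2. apply Rsqr_sqrt. lra. }
  assert (Hge : 0 <= vof t) by (unfold vof; apply sqrt_pos).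
  assert (H1 : 1 < (1+t)/(3*(1-t))).
  { assert ((1+t)/(3*(1-t)) - 1 = (4*t-2)/(3*(1-t))) by (field; lra).
    assert (0 < (4*t-2)/(3*(1-t))) by (apply Rdiv_lt_0_compat; lra). lra. }
  assert (H2 : (1+t)/(3*(1-t)) < 4/3).
  { assert (4/3 - (1+t)/(3*(1-t)) = (3 - 5*t)/(3*(1-t))) by (field; lra).
    assert (0 < (3-5*t)/(3*(1-t))) by (apply Rdiv_lt_0_compat; lra). lra. }
  split; [|split; [auto|split]].
  - split; nra.
  - rewrite Hsq. field. lra.
  - rewrite Hsq. field. lra.
Qed.

Lemma g_vof : forall t, 1/2 < t < 3/5 -> p2 t = 0 -> gf (vof t) = 0.
Proof.
  intros t Ht Hp.
  destruct (vof_facts t Ht) as [Hr [Hsq [HY Ht']]].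
  pose proof (p2_g (vof t) ltac:(nra)) as E. rewrite Ht', Hp in E.
  pose proof (gneg (vof t) ltac:(lra)).
  assert (Hz : gf (vof t) * gf (- vof t) = 0) by nra.
  apply Rmult_integral in Hz as [Hz|Hz]; lra.
Qed.

Lemma pev_cons : forall c l x, pev (c::l) x = IZR c + x * pev l x.
Proof. reflexivity. Qed.

Lemma P_uniq : forall K0 K1, 1/4 < K0 < 81/169 -> 1/4 < K1 < 81/169 ->
  Pf K0 = 0 -> Pf K1 = 0 -> K0 = K1.
Proof.
  assert (key : forall K0 K1, 1/4 < K0 < 81/169 -> 1/4 < K1 < 81/169 ->
    Pf K0 = 0 -> Pf K1 = 0 -> K0 < K1 -> False).
  { intros K0 K1 H0 H1 P0 P1 Hlt.
    pose proof (P_bern K0 ltac:(lra)) as E0. pose proof (P_bern K1 ltac:(lra)) as E1.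
    rewrite P0 in E0. rewrite P1 in E1.
    set (m0 := (324 - 676*K0)/(676*K0-169)) in *.
    set (m1 := (324 - 676*K1)/(676*K1-169)) in *.
    assert (Ha0 : 0 < (676*K0-169)^20) by (apply pow_lt; lra).
    assert (Ha1 : 0 < (676*K1-169)^20) by (apply pow_lt; lra).
    assert (Z0 : pev LP m0 = 0) by nra.
    assert (Z1 : pev LP m1 = 0) by nra.
    assert (Hm1 : 0 < m1) by (unfold m1; apply Rdiv_lt_0_compat; lra).
    assert (Hm : m1 < m0).
    { assert (m0 - m1 = 155*676*(K1-K0)/((676*K0-169)*(676*K1-169))) by (unfold m0, m1; field; split; lra).
      assert (0 < 155*676*(K1-K0)/((676*K0-169)*(676*K1-169))) by (apply Rdiv_lt_0_compat; nra). lra. }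
    unfold LP in Z0, Z1.
    match type of Z0 with pev (?c :: ?l) _ = 0 =>
      assert (S : pev (c :: l) m1 < pev (c :: l) m0) end.
    { apply pev_strict; [vm_compute; reflexivity | lra |].
      rewrite pev_cons. match goal with |- 0 < IZR ?c + _ * pev ?r _ =>
        destruct (pev_mono r 0 m0 ltac:(vm_compute; reflexivity) ltac:(lra)) as [A B] end.
      match goal with |- 0 < IZR ?c + _ => assert (0 < IZR c) by lra end.
      nra. }
    lra. }
  intros K0 K1 A B C D. destruct (Rtotal_order K0 K1) as [H3|[H3|H3]]; auto.
  - exfalso; apply (key K0 K1); auto.
  - exfalso; apply (key K1 K0); auto.
Qed.
Lemma sqrt3_sq : sqrt 3 * sqrt 3 = 3.
Proof. apply sqrt_sqrt. lra. Qed.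
Lemma sqrt3_pos : 0 < sqrt 3.
Proof. apply sqrt_lt_R0. lra. Qed.

Lemma key_k0 : forall k0 t1, 1/2 < k0 < 9/13 -> p4 k0 = 0 -> 1/2 < t1 < 3/5 -> p2 t1 = 0 ->
  k0 = sqrt 3 * (NUMf (vof t1) / DENf (vof t1)).
Proof.
  intros k0 t1 Hk Hp4 Ht Hp2.
  destruct (vof_facts t1 Ht) as [Hw _].
  pose proof (g_vof t1 Ht Hp2) as Hg.
  set (w := vof t1) in *.
  pose proof (DEN_pos w ltac:(lra)) as HD.
  set (phi := NUMf w / DENf w).
  assert (Hpsi : phi = PsiF w / ePsi).
  { pose proof (psi_id w) as E. rewrite Hg in E.
    assert (E' : DENf w * PsiF w = ePsi * NUMf w) by (unfold ePsi; lra).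
    unfold phi. apply (Rmult_eq_reg_l (DENf w * ePsi)); [|unfold ePsi; nra].
    field_simplify; [|unfold ePsi; lra|lra]. rewrite E'. ring. }
  assert (HK1 : Pf (3*phi^2) = 0).
  { pose proof (z_id w) as E. rewrite Hg in E.
    replace (3*phi^2) with (ZF w / dZ). apply Pz_zero; auto.
    rewrite Hpsi. unfold ePsi, dZ. lra. }
  assert (Hlb : 29/100 < phi) by (apply phi_lb; lra).
  assert (Hub : phi <= NUMf (103/100) / DENf (103/100)).
  { destruct (phi_min (103/100) w ltac:(lra) ltac:(lra) Hg) as [A _]. exact A. }
  pose proof phi_vr as Hvr.
  assert (HK0 : Pf (k0^2) = 0) by (rewrite <- p4_Pf; auto).
  assert (Heq : k0^2 = 3*phi^2).
  { apply P_uniq; auto; try (split; nra). }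
  pose proof sqrt3_sq. pose proof sqrt3_pos.
  assert (Hf : (k0 - sqrt 3 * phi) * (k0 + sqrt 3 * phi) = 0) by nra.
  apply Rmult_integral in Hf as [Hf|Hf]; [lra|nra].
Qed.

Lemma oneD : forall v k, 1 <= v ->
  6*sqrt 3*v^3/(3*v^2-1) - 3*sqrt 3 - k*(1-(8*((3*v^2+1)-2)/(3*v^2+1)^2)^5)
  = (v-1)^2*(9*(v+1)^2*Mf (3*v^2+1)/(3*v^2+1)^10)*(sqrt 3 * (NUMf v/DENf v) - k).
Proof.
  intros v k Hv. pose proof (Mf_pos (3*v^2+1) ltac:(nra)) as HM.
  rewrite NUMf_eq, DENf_eq. unfold Mf in *.
  field. repeat split; try nra.
Qed.
Lemma iso_bound : forall x y z Y, 0 < x -> 0 < y -> 0 < z -> 4 <= Y ->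
  (x+y+z)*(x*y+y*z+z*x)*(Y-2) = x*y*z*(Y+2)*(Y-1) ->
  0 <= (x+y+z)^3*(Y-2)^2 - 4*(Y-1)^3*(x*y*z) /\
  ((x+y+z)^3*(Y-2)^2 - 4*(Y-1)^3*(x*y*z) = 0 -> (x-y)*(y-z)*(z-x) = 0).
Proof.
  intros x y z Y Hx Hy Hz HY Hrel.
  set (s := x+y+z) in *. set (e2 := x*y+y*z+z*x) in *. set (e3 := x*y*z) in *.
  set (u := s*e2*(Y-2)) in *.
  assert (HD : ((x-y)*(y-z)*(z-x))^2 * s^3*(Y-2)^3 =
     s^3*(Y-2)*u^2 - 4*u^3 - 4*s^6*e3*(Y-2)^3 + 18*s^3*e3*(Y-2)^2*u - 27*e3^2*s^3*(Y-2)^3).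
  { unfold u, s, e2, e3. ring. }
  rewrite Hrel in HD.
  set (A1 := s^3*(Y-2)^2 - 4*(Y-1)^3*e3).
  set (B := 4*(Y-2)*s^3 - (Y+2)^3*e3).
  assert (HD2 : ((x-y)*(y-z)*(z-x))^2 * s^3*(Y-2)^3 = - e3 * A1 * B).
  { rewrite HD. unfold A1, B. ring. }
  assert (Hs : 0 < s) by (unfold s; lra).
  assert (He3 : 0 < e3) by (unfold e3; apply Rmult_lt_0_compat; [apply Rmult_lt_0_compat|]; lra).
  assert (Hs3 : 0 < s^3) by (apply pow_lt; lra).
  assert (HY3 : 0 < (Y-2)^3) by (apply pow_lt; lra).
  assert (HL : 0 <= ((x-y)*(y-z)*(z-x))^2 * s^3*(Y-2)^3).
  { apply Rmult_le_pos; [apply Rmult_le_pos; [apply pow2_ge_0|lra]|lra]. }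
  split.
  - destruct (Rle_lt_dec 0 A1) as [H|H]; [auto|exfalso].
    assert (Hpoly : 0 <= Y*(Y-4)^3).
    { apply Rmult_le_pos; [lra| apply pow_le; lra]. }
    assert (HB : (Y-2)*B < 0).
    { assert (Hlt : s^3*(Y-2)^2 < 4*(Y-1)^3*e3) by (unfold A1 in H; lra).
      assert (E : (Y-2)*B = 4*(s^3*(Y-2)^2) - (Y+2)^3*(Y-2)*e3) by (unfold B; ring).
      assert (E2 : 16*(Y-1)^3 - (Y+2)^3*(Y-2) = - (Y*(Y-4)^3)) by ring.
      nra. }
    assert (HB0 : B < 0).
    { destruct (Rle_lt_dec 0 B) as [h|h]; [|auto]. assert (0 <= (Y-2)*B) by (apply Rmult_le_pos; lra). lra. }
    assert (0 < A1*B) by nra.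
    assert (0 < e3*(A1*B)) by (apply Rmult_lt_0_compat; lra).
    rewrite HD2 in HL. nra.
  - intros H0. rewrite H0 in HD2.
    assert (Hz0 : ((x-y)*(y-z)*(z-x))^2 * (s^3*(Y-2)^3) = 0) by (rewrite <- Rmult_assoc, HD2; ring).
    apply Rmult_integral in Hz0 as [Hz0|Hz0]; [|nra].
    destruct (Req_dec ((x-y)*(y-z)*(z-x)) 0) as [Hq|Hq]; auto.
    exfalso; apply (pow_nonzero _ 2 Hq Hz0).
Qed.

Lemma iso_solve : forall x z t, 0 < x -> 0 < z -> 1/2 < t < 1 ->
  x*z = t*(1-t)*(x+z)^2 -> (2*x+z)^3*t^2*(1-t) = (1+t)^3*x^2*z -> x*(1-t) = t*z.
Proof.
  intros x z t Hx Hz Ht H1 H2.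
  assert (Hp : (x*(1-t) - t*z)*(x*t - (1-t)*z) = 0).
  { replace ((x*(1-t) - t*z)*(x*t - (1-t)*z)) with (t*(1-t)*(x+z)^2 - x*z) by ring. lra. }
  apply Rmult_integral in Hp as [Hp|Hp]; [lra|exfalso].
  assert (Hzz : z = x*t/(1-t)) by (field_simplify_eq; lra).
  assert (E1 : (1-t)^3 * ((2*x+z)^3*t^2*(1-t) - (1+t)^3*x^2*z) = 0) by (rewrite H2; ring).
  assert (E2 : (1-t)^3 * ((2*x+z)^3*t^2*(1-t) - (1+t)^3*x^2*z) = x^3*t*(1-t)*(2*t-1)^3).
  { rewrite Hzz. field. lra. }
  rewrite E2 in E1.
  assert (0 < x^3*t*(1-t)*(2*t-1)^3).
  { apply Rmult_lt_0_compat; [apply Rmult_lt_0_compat; [apply Rmult_lt_0_compat|]|]; try lra;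
    apply pow_lt; lra. }
  lra.
Qed.
Lemma iso_vals : forall x z t, 0 < x -> 1/2 < t < 1 -> x*(1-t) = t*z ->
  4*t*(1-t)*((x+x)*(x+z)*(z+x)) = 8*(x*x*z) /\ (x+x+z)^3*t^2*(1-t) = (1+t)^3*(x*x*z).
Proof.
  intros x z t Hx Ht H. assert (Hz : z = x*(1-t)/t) by (field_simplify_eq; lra).
  rewrite Hz. split; field; lra.
Qed.

Lemma iso_from : forall x z t, 0 < x ->
  4*t*(1-t)*((x+x)*(x+z)*(z+x)) = 8*(x*x*z) -> (x+x+z)^3*t^2*(1-t) = (1+t)^3*(x*x*z) ->
  x*z = t*(1-t)*(x+z)^2 /\ (2*x+z)^3*t^2*(1-t) = (1+t)^3*x^2*z.
Proof.
  intros x z t Hx H1 H2. split.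
  - apply (Rmult_eq_reg_l (8*x)); [|lra]. lra.
  - replace (2*x+z) with (x+x+z) by ring. rewrite H2. ring.
Qed.

Lemma q_pow5 : forall q, 0 < q < 1 -> q^5 < 1.
Proof. intros q Hq. assert (q^2 < 1) by nra. assert (q^4 < 1) by nra. nra. Qed.

Lemma eqlat : forall x y z, 0 < x -> 0 < y -> 0 < z ->
  (x+y)*(y+z)*(z+x) = 8*(x*y*z) -> x = y /\ y = z.
Proof.
  intros x y z Hx Hy Hz H.
  assert (E : x*(y-z)^2 + y*(z-x)^2 + z*(x-y)^2 = 0) by (rewrite <- (Rminus_diag_eq _ _ H); ring).
  assert (0 <= x*(y-z)^2) by (apply Rmult_le_pos; [lra|apply pow2_ge_0]).
  assert (0 <= y*(z-x)^2) by (apply Rmult_le_pos; [lra|apply pow2_ge_0]).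
  assert (0 <= z*(x-y)^2) by (apply Rmult_le_pos; [lra|apply pow2_ge_0]).
  assert (E1 : x*(y-z)^2 = 0) by lra. assert (E2 : z*(x-y)^2 = 0) by lra.
  apply Rmult_integral in E1 as [E1|E1]; [lra|]. apply Rmult_integral in E2 as [E2|E2]; [lra|].
  assert (y - z = 0) by (destruct (Req_dec (y-z) 0); auto; exfalso; apply (pow_nonzero _ 2 H3 E1)).
  assert (x - y = 0) by (destruct (Req_dec (x-y) 0); auto; exfalso; apply (pow_nonzero _ 2 H4 E2)).
  split; lra.
Qed.

Lemma main_xyz : forall k0 t1 k x y z,
  1/2 < k0 < 9/13 -> p4 k0 = 0 -> 1/2 < t1 < 3/5 -> p2 t1 = 0 -> k <= k0 ->
  0 < x -> 0 < y -> 0 < z ->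
  (x+y+z)^2/sqrt ((x+y+z)*x*y*z) >= 3*sqrt 3 + k*(1-(8*(x*y*z)/((x+y)*(y+z)*(z+x)))^5) /\
  ((x+y+z)^2/sqrt ((x+y+z)*x*y*z) = 3*sqrt 3 + k*(1-(8*(x*y*z)/((x+y)*(y+z)*(z+x)))^5) <->
   (x = y /\ y = z) \/ (k = k0 /\ ((x = y /\ x*(1-t1) = t1*z) \/ (y = z /\ y*(1-t1) = t1*x) \/ (z = x /\ z*(1-t1) = t1*y)))).
Proof.
  intros k0 t1 k x y z Hk0 Hp4 Ht1 Hp2 Hk Hx Hy Hz.
  set (s := x+y+z). set (e3 := x*y*z). set (Pi := (x+y)*(y+z)*(z+x)).
  set (q := 8*e3/Pi).
  assert (Hs : 0 < s) by (unfold s; lra).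
  assert (He3 : 0 < e3) by (unfold e3; apply Rmult_lt_0_compat; [apply Rmult_lt_0_compat|]; lra).
  assert (HPi : 0 < Pi) by (unfold Pi; apply Rmult_lt_0_compat; [apply Rmult_lt_0_compat|]; lra).
  assert (HPi8 : Pi - 8*e3 = x*(y-z)^2 + y*(z-x)^2 + z*(x-y)^2) by (unfold Pi, e3; ring).
  assert (HPi8' : 8*e3 <= Pi).
  { assert (0 <= x*(y-z)^2) by (apply Rmult_le_pos; [lra|apply pow2_ge_0]).
    assert (0 <= y*(z-x)^2) by (apply Rmult_le_pos; [lra|apply pow2_ge_0]).
    assert (0 <= z*(x-y)^2) by (apply Rmult_le_pos; [lra|apply pow2_ge_0]). lra. }
  assert (HqPi : q*Pi = 8*e3) by (unfold q; field; lra).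
  assert (Hq0 : 0 < q) by (unfold q; apply Rdiv_lt_0_compat; lra).
  assert (Hq1 : q <= 1).
  { assert (1 - q = (Pi - 8*e3)/Pi) by (unfold q; field; lra).
    assert (0 <= (Pi - 8*e3)/Pi) by (apply Rmult_le_pos; [lra| apply Rlt_le, Rinv_0_lt_compat; lra]). lra. }
  set (A := sqrt (s*x*y*z)).
  assert (HA2 : A*A = s*e3) by (unfold A, e3; rewrite sqrt_sqrt; [ring| apply Rlt_le; unfold s; repeat apply Rmult_lt_0_compat; lra]).
  assert (HA : 0 < A) by (unfold A; apply sqrt_lt_R0; unfold s; repeat apply Rmult_lt_0_compat; lra).
  set (sg := s^2/A).
  assert (Hsg : 0 < sg) by (unfold sg; apply Rdiv_lt_0_compat; [apply pow_lt|]; lra).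
  assert (Hsg2 : sg^2 = s^3/e3).
  { unfold sg. replace ((s^2/A)^2) with (s^4/(A*A)) by (field; lra). rewrite HA2. field; lra. }
  set (D := sqrt (1-q)).
  assert (HD2 : D*D = 1-q) by (unfold D; apply sqrt_sqrt; lra).
  assert (HD0 : 0 <= D) by (unfold D; apply sqrt_pos).
  set (Y := 4*(1+D)/q).
  assert (HY4 : 4 <= Y).
  { assert (Y - 4 = 4*(1+D-q)/q) by (unfold Y; field; lra).
    assert (0 <= 4*(1+D-q)/q) by (apply Rmult_le_pos; [lra| apply Rlt_le, Rinv_0_lt_compat; lra]). lra. }
  assert (HqY : q*Y^2 = 8*Y - 16).
  { assert (q*Y^2 - (8*Y-16) = 16*(D*D-(1-q))/q) by (unfold Y; field; lra).
    rewrite HD2 in H. replace (16*(1-q-(1-q))/q) with 0 in H by (field; lra). lra. }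
  assert (Hrel : (x+y+z)*(x*y+y*z+z*x)*(Y-2) = x*y*z*(Y+2)*(Y-1)).
  { assert (HPe : Pi = (x+y+z)*(x*y+y*z+z*x) - x*y*z) by (unfold Pi; ring).
    assert (H8 : 8*e3*Y^2 = (8*Y-16)*Pi) by (rewrite <- HqPi, <- HqY; ring).
    unfold e3 in H8. rewrite HPe in H8. lra. }
  destruct (iso_bound x y z Y Hx Hy Hz HY4 Hrel) as [HA1 HA1eq].
  fold s e3 in HA1, HA1eq.
  set (A1 := s^3*(Y-2)^2 - 4*(Y-1)^3*e3) in *.
  set (v := sqrt ((Y-1)/3)).
  assert (Hv2 : v^2 = (Y-1)/3) by (unfold v; rewrite <- Rsqr_pow2; apply Rsqr_sqrt; lra).
  assert (Hv0 : 0 <= v) by (unfold v; apply sqrt_pos).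
  assert (Hv1 : 1 <= v) by nra.
  assert (HYv : Y = 3*v^2+1) by lra.
  set (si := 6*sqrt 3*v^3/(3*v^2-1)).
  pose proof sqrt3_sq as S3. pose proof sqrt3_pos as S3p.
  assert (Hsi : 0 < si) by (unfold si; apply Rdiv_lt_0_compat; [apply Rmult_lt_0_compat; [lra|apply pow_lt; lra]| nra]).
  assert (Hsi2 : si^2 = 4*(Y-1)^3/(Y-2)^2).
  { assert (si^2 = 36*(sqrt 3*sqrt 3)*(v^2)^3/(3*v^2-1)^2) by (unfold si; field; nra).
    rewrite H, S3, Hv2. field. lra. }
  assert (Hdiff : sg^2 - si^2 = A1/(e3*(Y-2)^2)).
  { rewrite Hsg2, Hsi2. unfold A1. field. split; lra. }
  assert (HdenP : 0 < e3*(Y-2)^2) by (apply Rmult_lt_0_compat; [lra|apply pow_lt; lra]).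
  assert (Hsgsi : si <= sg).
  { destruct (Rle_lt_dec si sg) as [h|h]; auto. exfalso.
    assert (0 <= A1/(e3*(Y-2)^2)) by (apply Rmult_le_pos; [lra|apply Rlt_le, Rinv_0_lt_compat; lra]).
    assert (sg*sg < si*si) by (apply Rmult_le_0_lt_compat; lra).
    replace (sg^2) with (sg*sg) in Hdiff by ring. replace (si^2) with (si*si) in Hdiff by ring. lra. }
  assert (Hsgeq : sg = si <-> A1 = 0).
  { split; intros h.
    - assert (A1/(e3*(Y-2)^2) = 0) by (rewrite <- Hdiff, h; ring).
      unfold Rdiv in H. apply Rmult_integral in H as [H|H]; auto.
      exfalso. assert (0 < /(e3*(Y-2)^2)) by (apply Rinv_0_lt_compat; lra). lra.
    - rewrite h in Hdiff. replace (0/(e3*(Y-2)^2)) with 0 in Hdiff by (field; lra).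
      assert ((sg-si)*(sg+si) = 0) by (replace ((sg-si)*(sg+si)) with (sg^2-si^2) by ring; lra).
      apply Rmult_integral in H as [H|H]; lra. }
  assert (Hqv : q = 8*((3*v^2+1)-2)/(3*v^2+1)^2).
  { rewrite <- HYv. apply (Rmult_eq_reg_r (Y^2)); [|nra]. rewrite HqY. field. lra. }
  pose proof (oneD v k0 Hv1) as HoneD. fold si in HoneD. rewrite <- Hqv in HoneD.
  set (c := 9*(v+1)^2*Mf (3*v^2+1)/(3*v^2+1)^10) in HoneD.
  assert (Hc : 0 < c).
  { unfold c. apply Rdiv_lt_0_compat; [|apply pow_lt; nra].
    apply Rmult_lt_0_compat; [apply Rmult_lt_0_compat; [lra|apply pow_lt; lra]| apply Mf_pos; nra]. }
  pose proof (key_k0 k0 t1 Hk0 Hp4 Ht1 Hp2) as Hkey.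
  destruct (vof_facts t1 Ht1) as [Hw [Hw2 [HwY Hwt]]].
  pose proof (g_vof t1 Ht1 Hp2) as Hg.
  set (w := vof t1) in *.
  destruct (phi_min v w Hv1 ltac:(lra) Hg) as [Hmin Hmineq].
  set (T2 := (v-1)^2*c*(sqrt 3*(NUMf v/DENf v) - k0)) in HoneD.
  assert (HT2 : 0 <= T2).
  { unfold T2. apply Rmult_le_pos; [apply Rmult_le_pos; [apply pow2_ge_0|lra]|].
    rewrite Hkey. replace (sqrt 3 * (NUMf v / DENf v) - sqrt 3 * (NUMf w / DENf w)) with (sqrt 3 * (NUMf v / DENf v - NUMf w / DENf w)) by ring.
    apply Rmult_le_pos; lra. }
  assert (Hq5 : q^5 <= 1).
  { destruct (Rlt_le_dec q 1) as [h|h]. pose proof (q_pow5 q ltac:(lra)). lra.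
    replace q with 1 by lra. lra. }
  set (T3 := (k0-k)*(1-q^5)).
  assert (HT3 : 0 <= T3) by (unfold T3; apply Rmult_le_pos; lra).
  assert (Hdec : sg - (3*sqrt 3 + k*(1-q^5)) = (sg - si) + T2 + T3).
  { unfold T3. rewrite <- HoneD. ring. }
  fold sg.
  split; [lra|].
  split.
  -
    intros Heq.
    assert (E1 : sg = si) by lra. assert (E2 : T2 = 0) by lra. assert (E3 : T3 = 0) by lra.
    assert (Hq1eq : q = 1 -> x = y /\ y = z).
    { intros h. apply eqlat; auto. assert (HH : Pi = 8*e3) by (rewrite <- HqPi, h; ring). exact HH. }
    unfold T3 in E3. apply Rmult_integral in E3 as [E3|E3].
    2:{ left. apply Hq1eq. destruct (Rlt_le_dec q 1) as [h|h]; [|lra].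
        pose proof (q_pow5 q ltac:(lra)). lra. }
    assert (Hkk : k = k0) by lra.
    unfold T2 in E2. apply Rmult_integral in E2 as [E2|E2].
    + apply Rmult_integral in E2 as [E2|E2]; [|lra].
      left. apply Hq1eq.
      assert (v = 1) by (destruct (Req_dec (v-1) 0) as [h|h]; [lra| exfalso; apply (pow_nonzero _ 2 h E2)]).
      assert (Y = 4) by (rewrite HYv, H; ring).
      rewrite H0 in HqY. lra.
    + right. split; auto.
      assert (Hvw : v = w).
      { apply Hmineq. rewrite Hkey in E2.
        assert (E2' : sqrt 3 * (NUMf v / DENf v - NUMf w / DENf w) = 0) by (rewrite <- E2; ring).
        apply Rmult_integral in E2' as [h|h]; lra. }
      apply Hsgeq in E1.
      pose proof (HA1eq E1) as Hprod.
      assert (HYt : Y = 2/(1-t1)) by (rewrite HYv, Hvw; auto).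
      assert (Hqt : q = 4*t1*(1-t1)).
      { apply (Rmult_eq_reg_r (Y^2)); [|nra]. rewrite HqY, HYt. field. lra. }
      assert (Hg1 : 4*t1*(1-t1)*Pi = 8*e3) by (rewrite <- Hqt; auto).
      assert (Hg2 : s^3*t1^2*(1-t1) = (1+t1)^3*e3).
      { assert (E : (1-t1)^3/4*A1 = s^3*t1^2*(1-t1) - (1+t1)^3*e3) by (unfold A1; rewrite HYt; field; lra).
        rewrite E1 in E. lra. }
      unfold Pi, e3, s in Hg1, Hg2.
      apply Rmult_integral in Hprod as [Hprod|Hprod]; [apply Rmult_integral in Hprod as [Hprod|Hprod]|].
      * left. assert (y = x) by lra. subst y. split; [auto|].
        destruct (iso_from x z t1 Hx Hg1 Hg2) as [I1 I2].
        apply iso_solve; auto; lra.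
      * right; left. assert (z = y) by lra. subst z. split; [auto|].
        assert (G1 : 4*t1*(1-t1)*((y+y)*(y+x)*(x+y)) = 8*(y*y*x)) by (replace (8*(y*y*x)) with (8*(x*y*y)) by ring; rewrite <- Hg1; ring).
        assert (G2 : (y+y+x)^3*t1^2*(1-t1) = (1+t1)^3*(y*y*x)) by (replace (y+y+x) with (x+y+y) by ring; rewrite Hg2; ring).
        destruct (iso_from y x t1 Hy G1 G2) as [I1 I2].
        apply iso_solve; auto; lra.
      * right; right. assert (x = z) by lra. subst x. split; [auto|].
        assert (G1 : 4*t1*(1-t1)*((z+z)*(z+y)*(y+z)) = 8*(z*z*y)) by (replace (8*(z*z*y)) with (8*(z*y*z)) by ring; rewrite <- Hg1; ring).
        assert (G2 : (z+z+y)^3*t1^2*(1-t1) = (1+t1)^3*(z*z*y)) by (replace (z+z+y) with (z+y+z) by ring; rewrite Hg2; ring).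
        destruct (iso_from z y t1 Hz G1 G2) as [I1 I2].
        apply iso_solve; auto; lra.
  -
    intros [[Exy Eyz] | [Hkk Hcase]].
    + subst y z.
      assert (Hq : q = 1) by (unfold q, Pi, e3; field; lra).
      rewrite Hq. replace (1^5) with 1 by ring.
      assert (Hsg27 : sg^2 = 27) by (rewrite Hsg2; unfold s, e3; field; lra).
      assert ((sg - 3*sqrt 3)*(sg + 3*sqrt 3) = 0) by (replace ((sg - 3*sqrt 3)*(sg + 3*sqrt 3)) with (sg^2 - 9*(sqrt 3*sqrt 3)) by ring; rewrite S3; lra).
      apply Rmult_integral in H as [H|H]; lra.
    + assert (Hv : q = 4*t1*(1-t1) /\ s^3*t1^2*(1-t1) = (1+t1)^3*e3).
      { destruct Hcase as [[E F]|[[E F]|[E F]]].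
        - subst y. destruct (iso_vals x z t1 Hx ltac:(lra) F) as [I1 I2].
          split.
          + apply (Rmult_eq_reg_r Pi); [|lra]. rewrite HqPi. unfold Pi, e3. rewrite <- I1. ring.
          + unfold s, e3. rewrite I2. ring.
        - subst z. destruct (iso_vals y x t1 Hy ltac:(lra) F) as [I1 I2].
          split.
          + apply (Rmult_eq_reg_r Pi); [|lra]. rewrite HqPi. unfold Pi, e3.
            replace (8*(x*y*y)) with (8*(y*y*x)) by ring. rewrite <- I1. ring.
          + unfold s, e3. replace (x+y+y) with (y+y+x) by ring. replace (x*y*y) with (y*y*x) by ring. rewrite I2. ring.
        - subst x. destruct (iso_vals z y t1 Hz ltac:(lra) F) as [I1 I2].
          split.
          + apply (Rmult_eq_reg_r Pi); [|lra]. rewrite HqPi. unfold Pi, e3.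
            replace (8*(z*y*z)) with (8*(z*z*y)) by ring. rewrite <- I1. ring.
          + unfold s, e3. replace (z+y+z) with (z+z+y) by ring. replace (z*y*z) with (z*z*y) by ring. rewrite I2. ring. }
      destruct Hv as [Hqt Hs3].
      assert (HDt : D = 2*t1-1).
      { unfold D. rewrite Hqt. replace (1 - 4*t1*(1-t1)) with ((2*t1-1)^2) by ring.
        apply sqrt_pow2. lra. }
      assert (HYt : Y = 2/(1-t1)) by (unfold Y; rewrite HDt, Hqt; field; lra).
      assert (Hvw : v = w).
      { unfold v, w, vof. f_equal. rewrite HYt. field. lra. }
      assert (HA10 : A1 = 0).
      { unfold A1. rewrite HYt. apply (Rmult_eq_reg_l ((1-t1)^3/4)); [|apply Rgt_not_eq; apply Rdiv_lt_0_compat; [apply pow_lt|]; lra].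
        replace ((1-t1)^3/4*0) with 0 by ring. rewrite <- (Rminus_diag_eq _ _ Hs3). field. lra. }
      assert (E1 : sg = si) by (apply Hsgeq; auto).
      assert (E2 : T2 = 0) by (unfold T2; rewrite Hvw, Hkey; ring).
      assert (E3 : T3 = 0) by (unfold T3; rewrite Hkk; ring).
      lra.
Qed.
Lemma conv_ineq : forall s A L, 0 < s -> 0 < A ->
  (s^2/A >= L -> s >= L*(A/s)) /\ (s = L*(A/s) <-> s^2/A = L).
Proof.
  intros s A L Hs HA.
  assert (E : s - L*(A/s) = (A/s)*(s^2/A - L)) by (field; split; lra).
  assert (HAs : 0 < A/s) by (apply Rdiv_lt_0_compat; lra).
  split; [|split].
  - intros H. assert (0 <= (A/s)*(s^2/A - L)) by (apply Rmult_le_pos; lra). lra.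
  - intros H. assert ((A/s)*(s^2/A - L) = 0) by lra.
    apply Rmult_integral in H0 as [h|h]; lra.
  - intros H. assert ((A/s)*(s^2/A - L) = 0) by (rewrite H; ring). lra.
Qed.

Theorem theorem2 (k0 t1 : R) :
  1/2 < k0 < 9/13 -> p4 k0 = 0 ->
  1/2 < t1 < 3/5 -> p2 t1 = 0 ->
  forall k : R, k <= k0 ->
  forall a b c : R, is_triangle a b c ->
    let p := semiper a b c in
    let r := inradius a b c in
    let RR := circumradius a b c in
    p >= 3 * sqrt 3 * r + k * (1 - (2 * r / RR) ^ 5) * r /\
    (p = 3 * sqrt 3 * r + k * (1 - (2 * r / RR) ^ 5) * r <->
       (a = b /\ b = c) \/ (k = k0 /\ ratio_2t11 t1 a b c)).
Proof.
  intros Hk0 Hp4 Ht1 Hp2 k Hk a b c Htri p r RR.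
  destruct Htri as (Ha & Hb & Hc & H1 & H2 & H3).
  set (x := semiper a b c - a). set (y := semiper a b c - b). set (z := semiper a b c - c).
  assert (Hx : 0 < x) by (unfold x, semiper; lra).
  assert (Hy : 0 < y) by (unfold y, semiper; lra).
  assert (Hz : 0 < z) by (unfold z, semiper; lra).
  assert (Hsp : semiper a b c = x+y+z) by (unfold x, y, z, semiper; lra).
  assert (HA : area a b c = sqrt ((x+y+z)*x*y*z)).
  { unfold area. cbv zeta. rewrite <- Hsp. reflexivity. }
  assert (Ea : a = y+z) by (unfold y, z, semiper; lra).
  assert (Eb : b = z+x) by (unfold x, z, semiper; lra).
  assert (Ec : c = x+y) by (unfold x, y, semiper; lra).
  unfold p, r, RR, inradius, circumradius. rewrite HA, Hsp.
  clearbody x y z. subst a b c.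
  clear Ha Hb Hc H1 H2 H3 HA Hsp p r RR.
  set (s := x+y+z). set (A := sqrt (s*x*y*z)).
  assert (Hs : 0 < s) by (unfold s; lra).
  assert (HA2 : A*A = s*(x*y*z)) by (unfold A; rewrite sqrt_sqrt; [ring| apply Rlt_le; unfold s; repeat apply Rmult_lt_0_compat; lra]).
  assert (HA : 0 < A) by (unfold A; apply sqrt_lt_R0; unfold s; repeat apply Rmult_lt_0_compat; lra).
  assert (Hq : 2 * (A / s) / ((y+z)*(z+x)*(x+y) / (4 * A)) = 8*(x*y*z)/((x+y)*(y+z)*(z+x))).
  { replace (2 * (A / s) / ((y+z)*(z+x)*(x+y) / (4 * A))) with (8*(A*A)/(s*((x+y)*(y+z)*(z+x)))).
    - rewrite HA2. field. repeat split; lra.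
    - field. repeat split; try lra. }
  rewrite Hq.
  set (q := 8*(x*y*z)/((x+y)*(y+z)*(z+x))).
  destruct (main_xyz k0 t1 k x y z Hk0 Hp4 Ht1 Hp2 Hk Hx Hy Hz) as [M1 M2].
  fold s A q in M1, M2.
  destruct (conv_ineq s A (3*sqrt 3 + k*(1-q^5)) Hs HA) as [C1 C2].
  replace (3 * sqrt 3 * (A / s) + k * (1 - q ^ 5) * (A / s)) with ((3*sqrt 3 + k*(1-q^5))*(A/s)) by ring.
  split; [apply C1; auto|].
  rewrite C2, M2. unfold ratio_2t11.
  split.
  - intros [[E1 E2]|[Ek Hc]]; [left; split; lra|right; split; [auto|]].
    destruct Hc as [[E F]|[[E F]|[E F]]].
    + right; right. subst y. split; [lra|ring].
    + left. subst z. split; [lra|ring].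
    + right; left. subst z. split; [lra|ring].
  - intros [[E1 E2]|[Ek Hc]]; [left; split; lra|right; split; [auto|]].
    destruct Hc as [[E F]|[[E F]|[E F]]].
    + right; left. assert (y = z) by lra. subst y. split; [auto|lra].
    + right; right. assert (z = x) by lra. subst z. split; [auto|lra].
    + left. assert (x = y) by lra. subst x. split; [auto|lra].
Qed.
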